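(* In a phase space $Z_2$, the permanent source produced time harmonic perturbation propagation problem is well posed on every finite interval of time $[0,t_0]$, and the null solution is unstable (in the sense of Lyapunov) with respect to the class $Z_2$ of amplitudes.
   Context: Fix constants $U_0,c_0,\rho_0>0$, $\omega_f\in\mathbb{R}$, $h$ the Heaviside function. The permanent source produced time harmonic perturbation propagation problem with amplitude $A=(F,G,H,P)$: find $(v_x',v_y',v_z',p')$, zero for $t\le0$, with $\partial_t v_x' + U_0\partial_x v_x' + \frac1{\rho_0}\partial_x p' = h(t)F\sin\omega_f t$, $\partial_t v_y' + U_0\partial_x v_y' + \frac1{\rho_0}\partial_y p' = h(t)G\sin\omega_f t$, $\partial_t v_z' + U_0\partial_x v_z' + \frac1{\rho_0}\partial_z p' = h(t)H\sin\omega_f t$, $\partial_t p' + U_0\partial_xp' + \rho_0c_0^2(\partial_xv_x'+\partial_yv_y'+\partial_zv_z') = h(t)P\sin\omega_f t$. Phase space $Z_2$: fix real constants $k_i,l_i,m_i$ ($i=1,\dots,4$) with $k_1k_2k_3k_4\neq0$ and $\Delta = \frac{c_0\rho_0}{k_3k_4}[r_1(k_2k_3k_4+k_3m_2m_4+k_4l_2l_3) + r_2(k_1k_3k_4+k_3m_1m_4+k_4l_1l_3)]\neq0$, $r_i=\sqrt{k_i^2+l_i^2+m_i^2}$. With $\xi_i=k_ix+l_iy+m_iz$, $Z_2$ is the set of systems $(F,G,H,P)$ of bounded $C^1$ functions on $\mathbb{R}^3$ of the form $F = k_1f_1(\xi_1)+k_2f_2(\xi_2)+\frac{l_3}{k_3}f_3(\xi_3)+\frac{m_4}{k_4}f_4(\xi_4)$,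 $G = l_1f_1(\xi_1)+l_2f_2(\xi_2)-f_3(\xi_3)$, $H = m_1f_1(\xi_1)+m_2f_2(\xi_2)-f_4(\xi_4)$, $P = -c_0\rho_0r_1f_1(\xi_1)+c_0\rho_0r_2f_2(\xi_2)$ with $f_i$ continuously differentiable, normed by $\|A\|_{Z_2}=\max\{\sup|F|,\sup|G|,\sup|H|,\sup|P|\}$. Well-posedness on $[0,t_0]$: (a) for every $A\in Z_2$ there is a unique solution defined for $t\in[0,t_0]$; (b) if $A_n\to A$ in $Z_2$ then the corresponding solutions converge in $Z_2$ to the solution for $A$ at every $t\in[0,t_0]$. The null solution is stable if the problem is well posed on $[0,t_0]$ for every $t_0>0$ and for every $\varepsilon>0$ there is $\eta>0$ such that $\|A\|_{Z_2}<\eta$ implies that the solution has $Z_2$-norm $<\varepsilon$ for all $t\ge0$; unstable means not stable. *)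

(* Defs.v *)
From Stdlib Require Import Reals.
From Coquelicot Require Import Coquelicot.
Open Scope R_scope.

Record amp := mkAmp {
  aF : R -> R -> R -> R;
  aG : R -> R -> R -> R;
  aH : R -> R -> R -> R;
  aP : R -> R -> R -> R }.

(** Perturbation fields (v_x', v_y', v_z', p') : functions of (t,x,y,z). *)
Record field := mkField {
  vx : R -> R -> R -> R -> R;
  vy : R -> R -> R -> R -> R;
  vz : R -> R -> R -> R -> R;
  pp : R -> R -> R -> R -> R }.

(** Heaviside function (the value at 0 is irrelevant since sin 0 = 0). *)
Definition heaviside (t : R) : R := if Rlt_dec 0 t then 1 else 0.

Definition C1fun (f : R -> R) : Prop :=
  exists df : R -> R, (forall s, is_derive f s (df s)) /\
                      (forall s, continuous df s).

Definition rr (k l m : nat -> R) (i : nat) : R :=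
  sqrt (k i ^ 2 + l i ^ 2 + m i ^ 2).

Definition DeltaZ2 (c0 rho0 : R) (k l m : nat -> R) : R :=
  c0 * rho0 / (k 3%nat * k 4%nat) *
  (rr k l m 1 * (k 2%nat * k 3%nat * k 4%nat + k 3%nat * m 2%nat * m 4%nat
                 + k 4%nat * l 2%nat * l 3%nat)
 + rr k l m 2 * (k 1%nat * k 3%nat * k 4%nat + k 3%nat * m 1%nat * m 4%nat
                 + k 4%nat * l 1%nat * l 3%nat)).

Definition bounded3 (f : R -> R -> R -> R) : Prop :=
  exists M, forall x y z, Rabs (f x y z) <= M.

Definition inZ2 (c0 rho0 : R) (k l m : nat -> R) (A : amp) : Prop :=
  (exists f1 f2 f3 f4 : R -> R,
     C1fun f1 /\ C1fun f2 /\ C1fun f3 /\ C1fun f4 /\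
     let xi := fun i x y z => k i * x + l i * y + m i * z in
     (forall x y z,
        aF A x y z = k 1%nat * f1 (xi 1%nat x y z) + k 2%nat * f2 (xi 2%nat x y z)
                     + l 3%nat / k 3%nat * f3 (xi 3%nat x y z)
                     + m 4%nat / k 4%nat * f4 (xi 4%nat x y z)) /\
     (forall x y z,
        aG A x y z = l 1%nat * f1 (xi 1%nat x y z) + l 2%nat * f2 (xi 2%nat x y z)
                     - f3 (xi 3%nat x y z)) /\
     (forall x y z,
        aH A x y z = m 1%nat * f1 (xi 1%nat x y z) + m 2%nat * f2 (xi 2%nat x y z)
                     - f4 (xi 4%nat x y z)) /\
     (forall x y z,
        aP A x y z = - c0 * rho0 * rr k l m 1 * f1 (xi 1%nat x y z)
                     + c0 * rho0 * rr k l m 2 * f2 (xi 2%nat x y z))) /\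
  bounded3 (aF A) /\ bounded3 (aG A) /\ bounded3 (aH A) /\ bounded3 (aP A).

(** The Z_2 norm  max(sup|F|, sup|G|, sup|H|, sup|P|), computed as the
    supremum (in extended reals, so defined for every amplitude) of all the
    values |F|, |G|, |H|, |P| on R^3. *)
Definition Z2norm (A : amp) : Rbar :=
  Lub_Rbar (fun r => exists x y z,
     r = Rabs (aF A x y z) \/ r = Rabs (aG A x y z) \/
     r = Rabs (aH A x y z) \/ r = Rabs (aP A x y z)).

Definition amp_sub (A B : amp) : amp :=
  mkAmp (fun x y z => aF A x y z - aF B x y z)
        (fun x y z => aG A x y z - aG B x y z)
        (fun x y z => aH A x y z - aH B x y z)
        (fun x y z => aP A x y z - aP B x y z).

Definition slice (v : field) (t : R) : amp :=
  mkAmp (vx v t) (vy v t) (vz v t) (pp v t).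

Definition convZ2 (c0 rho0 : R) (k l m : nat -> R) (Bn : nat -> amp) (B : amp) : Prop :=
  (forall n, inZ2 c0 rho0 k l m (Bn n)) /\ inZ2 c0 rho0 k l m B /\
  forall eps : R, 0 < eps ->
    exists N : nat, forall n : nat, (N <= n)%nat ->
      Rbar_lt (Z2norm (amp_sub (Bn n) B)) (Finite eps).

Definition cont4 (f : R -> R -> R -> R -> R) (t x y z : R) : Prop :=
  continuous (fun q : R * R * R * R => f (fst (fst (fst q))) (snd (fst (fst q)))
                                          (snd (fst q)) (snd q)) (t, x, y, z).

Definition C1_upto (t0 : R) (f ft fx fy fz : R -> R -> R -> R -> R) : Prop :=
  (forall t x y z, t < t0 ->
     is_derive (fun s => f s x y z) t (ft t x y z) /\
     is_derive (fun s => f t s y z) x (fx t x y z) /\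
     is_derive (fun s => f t x s z) y (fy t x y z) /\
     is_derive (fun s => f t x y s) z (fz t x y z) /\
     cont4 f t x y z /\ cont4 ft t x y z /\ cont4 fx t x y z /\
     cont4 fy t x y z /\ cont4 fz t x y z) /\
  (forall x y z, filterlim (fun s => f s x y z) (at_left t0) (locally (f t0 x y z))).

Definition IsSol (U0 c0 rho0 wf : R) (A : amp) (t0 : R) (v : field) : Prop :=
  (forall t x y z, t <= 0 ->
     vx v t x y z = 0 /\ vy v t x y z = 0 /\ vz v t x y z = 0 /\ pp v t x y z = 0) /\
  exists uxt uxx uxy uxz uyt uyx uyy uyz uzt uzx uzy uzz pt px py pz
         : R -> R -> R -> R -> R,
    C1_upto t0 (vx v) uxt uxx uxy uxz /\
    C1_upto t0 (vy v) uyt uyx uyy uyz /\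
    C1_upto t0 (vz v) uzt uzx uzy uzz /\
    C1_upto t0 (pp v) pt px py pz /\
    forall t x y z, t < t0 ->
      uxt t x y z + U0 * uxx t x y z + / rho0 * px t x y z
        = heaviside t * aF A x y z * sin (wf * t) /\
      uyt t x y z + U0 * uyx t x y z + / rho0 * py t x y z
        = heaviside t * aG A x y z * sin (wf * t) /\
      uzt t x y z + U0 * uzx t x y z + / rho0 * pz t x y z
        = heaviside t * aH A x y z * sin (wf * t) /\
      pt t x y z + U0 * px t x y z
        + rho0 * c0 ^ 2 * (uxx t x y z + uyy t x y z + uzz t x y z)
        = heaviside t * aP A x y z * sin (wf * t).

Definition WellPosed (U0 c0 rho0 wf : R) (k l m : nat -> R) (t0 : R) : Prop :=
  (forall A, inZ2 c0 rho0 k l m A ->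
     exists v, IsSol U0 c0 rho0 wf A t0 v /\
       forall w, IsSol U0 c0 rho0 wf A t0 w ->
         forall t x y z, 0 <= t <= t0 ->
           vx w t x y z = vx v t x y z /\ vy w t x y z = vy v t x y z /\
           vz w t x y z = vz v t x y z /\ pp w t x y z = pp v t x y z) /\
  (forall (An : nat -> amp) (A : amp) (vn : nat -> field) (v : field),
     convZ2 c0 rho0 k l m An A ->
     (forall n, IsSol U0 c0 rho0 wf (An n) t0 (vn n)) ->
     IsSol U0 c0 rho0 wf A t0 v ->
     forall t, 0 <= t <= t0 ->
       convZ2 c0 rho0 k l m (fun n => slice (vn n) t) (slice v t)).

Definition GlobalSol (U0 c0 rho0 wf : R) (A : amp) (v : field) : Prop :=
  forall t0, 0 < t0 -> IsSol U0 c0 rho0 wf A t0 v.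

Definition NullStable (U0 c0 rho0 wf : R) (k l m : nat -> R) : Prop :=
  (forall t0, 0 < t0 -> WellPosed U0 c0 rho0 wf k l m t0) /\
  forall eps, 0 < eps -> exists eta, 0 < eta /\
    forall A v, inZ2 c0 rho0 k l m A ->
      Rbar_lt (Z2norm A) (Finite eta) ->
      GlobalSol U0 c0 rho0 wf A v ->
      forall t, 0 <= t -> Rbar_lt (Z2norm (slice v t)) (Finite eps).

(* Main.v *)
Require Import Defs.
From Stdlib Require Import Reals Lra Psatz.
From Coquelicot Require Import Coquelicot.
Open Scope R_scope.

Module Mod_G1.
Open Scope R_scope.
Open Scope R_scope.

Lemma cont_extract {T : UniformSpace} (g : T -> R -> R) (p0 : T) (y0 : R) :
  continuous (fun q : T * R => g (fst q) (snd q)) (p0, y0) ->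
  forall eps : posreal, exists d : posreal, forall p y,
    ball p0 d p -> Rabs (y - y0) < d -> Rabs (g p y - g p0 y0) < eps.
Proof.
  intros Hc eps.
  assert (H := Hc (ball (g p0 y0) eps) (locally_ball _ _)).
  destruct H as [d Hd]. exists d. intros p y Hp Hy.
  specialize (Hd (p, y)). simpl in Hd. apply Hd. split; auto.
Qed.

Lemma ball_refl' {T : UniformSpace} (p : T) (e : posreal) : ball p e p.
Proof. apply ball_center. Qed.

Lemma tube {T : UniformSpace} (g : T -> R -> R) (p0 : T) (lo hi : R) :
  (forall y, lo <= y <= hi -> continuous (fun q : T * R => g (fst q) (snd q)) (p0, y)) ->
  forall eps : posreal, locally p0 (fun p => forall y, lo <= y <= hi -> Rabs (g p y - g p0 y) < eps).
Proof.
  intros Hc eps.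
  destruct (Rle_or_lt lo hi) as [Hlh|Hlh]; cycle 1.
  { exists (mkposreal 1 Rlt_0_1). intros p _ y Hy. lra. }
  set (Q := fun u => locally p0 (fun p => forall y, lo <= y <= u -> Rabs (g p y - g p0 y) < eps)).
  assert (Qmono : forall u v, v <= u -> Q u -> Q v).
  { intros u v Hvu HQ. unfold Q in *. eapply filter_imp; [|exact HQ]. simpl.
    intros p Hp y Hy. apply Hp. lra. }
  assert (step : forall s, lo <= s <= hi -> exists d : posreal,
     forall u, s - d < u -> Q u -> Q (s + d / 2)).
  { intros s Hs.
    assert (he : 0 < eps / 2) by (destruct eps; simpl; lra).
    destruct (cont_extract g p0 s (Hc s Hs) (mkposreal _ he)) as [d Hd]. simpl in Hd.
    exists d. intros u Hu HQ. unfold Q in *.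
    assert (Hb : locally p0 (ball p0 d)) by apply locally_ball.
    generalize (filter_and _ _ HQ Hb). apply filter_imp. intros p [H1 H2] y Hy.
    destruct (Rle_or_lt y u) as [Hyu|Hyu].
    - apply H1. lra.
    - assert (Hys : Rabs (y - s) < d).
      { apply Rabs_def1; destruct d; simpl in *; lra. }
      pose proof (Hd p y H2 Hys) as A1.
      pose proof (Hd p0 y (ball_refl' p0 d) Hys) as A2.
      replace (g p y - g p0 y) with ((g p y - g p0 s) - (g p0 y - g p0 s)) by ring.
      eapply Rle_lt_trans; [apply Rabs_triang|]. rewrite Rabs_Ropp.
      destruct eps; simpl in *; lra. }
  set (E := fun u => lo <= u <= hi /\ Q u).
  assert (Elo : E lo).
  { split; [lra|]. unfold Q.
    destruct (cont_extract g p0 lo (Hc lo (conj (Rle_refl _) Hlh)) eps) as [d Hd].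
    exists d. intros p Hp y Hy. replace y with lo by lra. apply Hd; auto.
    rewrite Rminus_diag, Rabs_R0. apply cond_pos. }
  assert (Eb : bound E) by (exists hi; intros u [Hu _]; lra).
  destruct (completeness E Eb (ex_intro _ lo Elo)) as [s [Hs1 Hs2]].
  assert (Hslo : lo <= s) by (apply Hs1; exact Elo).
  assert (Hshi : s <= hi) by (apply Hs2; intros u [Hu _]; lra).
  destruct (step s (conj Hslo Hshi)) as [d Hd].
  assert (Hex : exists u, E u /\ s - d < u).
  { apply Classical_Prop.NNPP. intro Hn.
    assert (s <= s - d).
    { apply Hs2. intros u Hu. apply Rnot_lt_le. intro Hlt. apply Hn. exists u. split; auto. }
    destruct d; simpl in *; lra. }
  destruct Hex as [u [[Hu1 Hu2] Hu3]].
  pose proof (Hd u Hu3 Hu2) as HQ.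
  destruct (Rle_or_lt hi (s + d / 2)) as [Hh|Hh].
  - apply Qmono with (s + d/2); auto.
  - exfalso. pose proof (cond_pos d). assert (E (s + d/2)) by (split; [lra|auto]).
    assert (s + d/2 <= s) by (apply Hs1; auto). destruct d; simpl in *; lra.
Qed.

Lemma cont_section {T : UniformSpace} (g : T -> R -> R) p y :
  continuous (fun q : T * R => g (fst q) (snd q)) (p, y) -> continuous (g p) y.
Proof.
  intro H. apply (continuous_comp_2 (fun _ : R => p) (fun y => y) g y); auto.
  - apply continuous_const.
  - apply continuous_id.
Qed.

Lemma abs_RInt_le_gen (f : R -> R) u v M :
  ex_RInt f u v -> (forall y, Rmin u v <= y <= Rmax u v -> Rabs (f y) <= M) ->
  Rabs (RInt f u v) <= Rabs (v - u) * M.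
Proof.
  intros He Hb. destruct (Rle_or_lt u v) as [Huv|Huv].
  - rewrite (Rabs_right (v - u)) by lra. apply abs_RInt_le_const; auto.
    intros t Ht. apply Hb. rewrite Rmin_left, Rmax_right; lra.
  - rewrite <- opp_RInt_swap by (apply ex_RInt_swap; auto). change (opp (RInt f v u)) with (- RInt f v u).
    rewrite Rabs_Ropp, (Rabs_left (v - u)) by lra.
    replace (- (v - u)) with (u - v) by ring.
    apply abs_RInt_le_const; [lra| apply ex_RInt_swap; auto |].
    intros t Ht. apply Hb. rewrite Rmin_right, Rmax_left; lra.
Qed.

Lemma ex_RInt_sec {T : UniformSpace} (g : T -> R -> R) p u v :
  (forall y, continuous (fun q : T * R => g (fst q) (snd q)) (p, y)) -> ex_RInt (g p) u v.
Proof.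
  intros H. apply (ex_RInt_continuous (V := R_CompleteNormedModule)). intros z _. apply cont_section. apply H.
Qed.

Lemma cont_RInt_param {T : UniformSpace} (g : T -> R -> R) (a b : T -> R) (p0 : T) :
  locally p0 (fun p => forall y, continuous (fun q : T * R => g (fst q) (snd q)) (p, y)) ->
  continuous a p0 -> continuous b p0 ->
  continuous (fun p => RInt (g p) (a p) (b p)) p0.
Proof.
  intros Hg Ha Hb.
  assert (Hg0 : forall y, continuous (fun q : T * R => g (fst q) (snd q)) (p0, y)).
  { destruct Hg as [d Hd]. apply Hd. apply ball_center. }
  set (a0 := a p0). set (b0 := b p0).
  apply filterlim_locally. intros eps.
  destruct (cont_extract g p0 a0 (Hg0 a0) (mkposreal 1 Rlt_0_1)) as [d1 Hd1].
  destruct (cont_extract g p0 b0 (Hg0 b0) (mkposreal 1 Rlt_0_1)) as [d2 Hd2].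
  simpl in Hd1, Hd2.
  set (Ma := Rabs (g p0 a0) + 1). set (Mb := Rabs (g p0 b0) + 1).
  assert (HMa : 0 < Ma) by (unfold Ma; pose proof (Rabs_pos (g p0 a0)); lra).
  assert (HMb : 0 < Mb) by (unfold Mb; pose proof (Rabs_pos (g p0 b0)); lra).
  set (L := Rabs (b0 - a0) + 1).
  assert (HL : 0 < L) by (unfold L; pose proof (Rabs_pos (b0 - a0)); lra).
  assert (he1 : 0 < Rmin d1 (eps / (3 * Ma))).
  { apply Rmin_pos. apply cond_pos. apply Rdiv_lt_0_compat. apply cond_pos. lra. }
  assert (he2 : 0 < Rmin d2 (eps / (3 * Mb))).
  { apply Rmin_pos. apply cond_pos. apply Rdiv_lt_0_compat. apply cond_pos. lra. }
  assert (he3 : 0 < eps / (3 * L)).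
  { apply Rdiv_lt_0_compat. apply cond_pos. lra. }
  pose proof (Ha _ (locally_ball a0 (mkposreal _ he1))) as Ha'.
  pose proof (Hb _ (locally_ball b0 (mkposreal _ he2))) as Hb'.
  pose proof (tube g p0 (Rmin a0 b0) (Rmax a0 b0) (fun y _ => Hg0 y) (mkposreal _ he3)) as Ht.
  pose proof (locally_ball p0 d1) as B1.
  pose proof (locally_ball p0 d2) as B2.
  unfold filtermap in Ha', Hb'.
  generalize (filter_and _ _ Hg (filter_and _ _ Ha' (filter_and _ _ Hb'
     (filter_and _ _ Ht (filter_and _ _ B1 B2))))).
  apply filter_imp. intros p [Hgp [Hap [Hbp [Htp [B1p B2p]]]]].
  simpl in Hap, Hbp, Htp. change (Rabs (RInt (g p) (a p) (b p) - RInt (g p0) a0 b0) < eps).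
  change (Rabs (a p - a0) < Rmin d1 (eps / (3 * Ma))) in Hap.
  change (Rabs (b p - b0) < Rmin d2 (eps / (3 * Mb))) in Hbp.
  assert (Hex : forall u v, ex_RInt (g p) u v) by (intros; apply ex_RInt_sec; auto).
  assert (Hex0 : forall u v, ex_RInt (g p0) u v) by (intros; apply ex_RInt_sec; auto).
  rewrite <- (RInt_Chasles (g p) (a p) a0 (b p)) by auto.
  rewrite <- (RInt_Chasles (g p) a0 b0 (b p)) by auto.
  change (plus (RInt (g p) (a p) a0) (plus (RInt (g p) a0 b0) (RInt (g p) b0 (b p))))
    with (RInt (g p) (a p) a0 + (RInt (g p) a0 b0 + RInt (g p) b0 (b p))).
  assert (I1 : Rabs (RInt (g p) (a p) a0) <= Rabs (a0 - a p) * Ma).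
  { apply abs_RInt_le_gen; auto. intros y Hy.
    assert (Rabs (y - a0) < d1).
    { pose proof (Rmin_l d1 (eps / (3 * Ma))).
      unfold Rmin, Rmax in Hy; destruct (Rle_dec (a p) a0);
      apply Rabs_def2 in Hap; apply Rabs_def1; lra. }
    pose proof (Hd1 p y B1p H). unfold Ma.
    replace (g p y) with ((g p y - g p0 a0) + g p0 a0) by ring.
    eapply Rle_trans; [apply Rabs_triang|]. lra. }
  assert (I3 : Rabs (RInt (g p) b0 (b p)) <= Rabs (b p - b0) * Mb).
  { apply abs_RInt_le_gen; auto. intros y Hy.
    assert (Rabs (y - b0) < d2).
    { pose proof (Rmin_l d2 (eps / (3 * Mb))).
      unfold Rmin, Rmax in Hy; destruct (Rle_dec b0 (b p));
      apply Rabs_def2 in Hbp; apply Rabs_def1; lra. }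
    pose proof (Hd2 p y B2p H). unfold Mb.
    replace (g p y) with ((g p y - g p0 b0) + g p0 b0) by ring.
    eapply Rle_trans; [apply Rabs_triang|]. lra. }
  assert (I2 : Rabs (RInt (g p) a0 b0 - RInt (g p0) a0 b0) <= Rabs (b0 - a0) * (eps / (3 * L))).
  { assert (E : RInt (g p) a0 b0 - RInt (g p0) a0 b0 = RInt (fun y => g p y - g p0 y) a0 b0).
    { symmetry. apply (RInt_minus (V := R_CompleteNormedModule)); auto. }
    rewrite E. apply abs_RInt_le_gen.
    - apply (ex_RInt_minus (V := R_NormedModule)); auto.
    - intros y Hy. apply Rlt_le. apply Htp. auto. }
  rewrite Rabs_minus_sym in I1.
  assert (Rabs (a p - a0) * Ma <= eps / 3).
  { pose proof (Rmin_r d1 (eps / (3 * Ma))).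
    apply Rle_trans with (eps / (3 * Ma) * Ma).
    apply Rmult_le_compat_r; lra. right. field. lra. }
  assert (Rabs (b p - b0) * Mb <= eps / 3).
  { pose proof (Rmin_r d2 (eps / (3 * Mb))).
    apply Rle_trans with (eps / (3 * Mb) * Mb).
    apply Rmult_le_compat_r; lra. right. field. lra. }
  assert (Rabs (b0 - a0) * (eps / (3 * L)) < eps / 3).
  { apply Rlt_le_trans with (L * (eps / (3 * L))).
    apply Rmult_lt_compat_r; [auto| unfold L; lra]. right. field. lra. }
  replace (RInt (g p) (a p) a0 + (RInt (g p) a0 b0 + RInt (g p) b0 (b p)) - RInt (g p0) a0 b0)
    with (RInt (g p) (a p) a0 + (RInt (g p) a0 b0 - RInt (g p0) a0 b0) + RInt (g p) b0 (b p)) by ring.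
  eapply Rle_lt_trans; [apply Rabs_triang|].
  pose proof (Rabs_triang (RInt (g p) (a p) a0) (RInt (g p) a0 b0 - RInt (g p0) a0 b0)).
  lra.
Qed.

Definition C2 (f : R -> R -> R) (x y : R) : Prop :=
  continuous (fun q : R * R => f (fst q) (snd q)) (x, y).

Lemma cont_to_pt (f : R -> R) x : continuous f x -> continuity_pt f x.
Proof.
  intro H. apply continuity_pt_locally. intro eps.
  apply (proj1 (filterlim_locally f (f x)) H eps).
Qed.

Lemma locally_lt (t T : R) : t < T -> locally t (fun y => y < T).
Proof. intro H. apply (open_lt T t H). Qed.

Lemma C2_Derive (g dg : R -> R -> R) (T s y : R) :
  s < T ->
  (forall s y, s < T -> is_derive (fun u => g u y) s (dg s y)) ->
  (forall s y, s < T -> C2 dg s y) ->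
  continuity_2d_pt (fun u v => Derive (fun z => g z v) u) s y.
Proof.
  intros Hs Hd Hc. apply continuity_2d_pt_filterlim.
  apply (continuous_ext_loc (fun q : R * R => Derive (fun z => g z (snd q)) (fst q)) (fun q : R * R => dg (fst q) (snd q)) (s, y)).
  - assert (Hl : locally (s, y) (fun q : R * R => fst q < T)).
    { destruct (locally_lt s T Hs) as [e He]. exists e. intros [u v] [Hu Hv]. apply He. exact Hu. }
    apply (filter_imp (fun q : R * R => fst q < T)); [|exact Hl]. intros [u v] Hu. simpl in *. symmetry. apply is_derive_unique. apply Hd; auto.
  - apply Hc; auto.
Qed.

Lemma derive_param (g dg : R -> R -> R) (a b : R -> R) (T t da db : R) :
  t < T ->
  (forall s y, s < T -> is_derive (fun u => g u y) s (dg s y)) ->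
  (forall s y, s < T -> C2 g s y) -> (forall s y, s < T -> C2 dg s y) ->
  is_derive a t da -> is_derive b t db ->
  is_derive (fun s => RInt (g s) (a s) (b s)) t
    (RInt (dg t) (a t) (b t) - g t (a t) * da + g t (b t) * db).
Proof.
  intros Ht Hd Hcg Hcd Ha Hb.
  assert (Hex : forall s u v, s < T -> ex_RInt (g s) u v).
  { intros s u v Hs. apply (ex_RInt_continuous (V := R_CompleteNormedModule)).
    intros z _. apply (cont_section g s z). apply Hcg; auto. }
  assert (Hloc : locally t (fun y => y < T)) by (apply locally_lt; auto).
  assert (E : RInt (dg t) (a t) (b t) = RInt (fun s => Derive (fun u => g u s) t) (a t) (b t)).
  { apply RInt_ext. intros x _. symmetry. apply is_derive_unique. apply Hd; auto. }
  rewrite E. unfold Rminus. rewrite Ropp_mult_distr_l.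
  apply (is_derive_RInt_param_bound_comp g a b t da db).
  - apply (filter_imp (fun y => y < T)); [|exact Hloc]. intros y Hy. apply Hex; auto.
  - exists (mkposreal 1 Rlt_0_1). apply (filter_imp (fun y => y < T)); [|exact Hloc]. intros y Hy. apply Hex; auto.
  - exists (mkposreal 1 Rlt_0_1). apply (filter_imp (fun y => y < T)); [|exact Hloc]. intros y Hy. apply Hex; auto.
  - auto.
  - auto.
  - exists (mkposreal 1 Rlt_0_1). apply (filter_imp (fun y => y < T)); [|exact Hloc]. intros y Hy s _.
    eexists. apply Hd; auto.
  - intros s _. apply (C2_Derive g dg T); auto.
  - exists (mkposreal _ (Rlt_Rminus _ _ Ht)). intros u v Hu _. simpl in Hu.
    apply (C2_Derive g dg T); auto. apply Rabs_def2 in Hu. lra.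
  - exists (mkposreal _ (Rlt_Rminus _ _ Ht)). intros u v Hu _. simpl in Hu.
    apply (C2_Derive g dg T); auto. apply Rabs_def2 in Hu. lra.
  - apply cont_to_pt. apply (cont_section g t). apply Hcg; auto.
  - apply cont_to_pt. apply (cont_section g t). apply Hcg; auto.
Qed.

End Mod_G1.
Import Mod_G1.

Module Mod_G2.
Open Scope R_scope.
Open Scope R_scope.

Definition cont3 (h : R -> R -> R -> R) (t x y : R) : Prop :=
  continuous (fun q : R * R * R => h (fst (fst q)) (snd (fst q)) (snd q)) (t, x, y).

Lemma cont_pair {T U V : UniformSpace} (f : T -> U) (g : T -> V) x :
  continuous f x -> continuous g x -> continuous (fun y => (f y, g y)) x.
Proof.
  intros Hf Hg. apply (continuous_comp_2 f g (fun a b => (a, b))); auto.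
  apply (continuous_ext (fun q => q)). { intros [a b]; reflexivity. }
  apply continuous_id.
Qed.

Lemma cont_fst {T U : UniformSpace} (x : T * U) : continuous fst x.
Proof. destruct x. apply continuous_fst. Qed.
Lemma cont_snd {T U : UniformSpace} (x : T * U) : continuous snd x.
Proof. destruct x. apply continuous_snd. Qed.

Lemma cont_Rplus {T : UniformSpace} (f g : T -> R) x :
  continuous f x -> continuous g x -> continuous (fun y => f y + g y) x.
Proof. intros. apply (continuous_plus (V := R_NormedModule)); auto. Qed.
Lemma cont_Rmult {T : UniformSpace} (f g : T -> R) x :
  continuous f x -> continuous g x -> continuous (fun y => f y * g y) x.
Proof. intros. apply (continuous_mult (K := R_AbsRing)); auto. Qed.
Lemma cont_Ropp {T : UniformSpace} (f : T -> R) x :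
  continuous f x -> continuous (fun y => - f y) x.
Proof. intros. apply (continuous_opp (V := R_NormedModule)); auto. Qed.
Lemma cont_Rminus {T : UniformSpace} (f g : T -> R) x :
  continuous f x -> continuous g x -> continuous (fun y => f y - g y) x.
Proof. intros. apply cont_Rplus; auto. apply cont_Ropp; auto. Qed.
Lemma cont_Rconst {T : UniformSpace} (c : R) (x : T) : continuous (fun _ => c) x.
Proof. apply continuous_const. Qed.

Lemma cont_p3 (t x y : R) :
  continuous (fun q : R * R * R => fst (fst q)) (t, x, y).
Proof. apply (continuous_comp fst fst). apply cont_fst. apply cont_fst. Qed.

Lemma loc_p3 (P : R -> Prop) t x y :
  locally t P -> locally (t, x, y) (fun q : R * R * R => P (fst (fst q))).
Proof. intro H. apply (cont_p3 t x y). exact H. Qed.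

Lemma loc_p2 (P : R -> Prop) t x :
  locally t P -> locally (t, x) (fun q : R * R => P (fst q)).
Proof. intro H. apply (cont_fst (t, x)). exact H. Qed.

Lemma cont3_RInt (f : R -> R -> R -> R -> R) (a b : R -> R) (t0 t x y : R) :
  t < t0 -> (forall t x y z, t < t0 -> cont4 f t x y z) ->
  continuous a t -> continuous b t ->
  cont3 (fun t x y => RInt (f t x y) (a t) (b t)) t x y.
Proof.
  intros Ht Hf Ha Hb. unfold cont3.
  apply (cont_RInt_param (fun p : R * R * R => f (fst (fst p)) (snd (fst p)) (snd p))
           (fun p => a (fst (fst p))) (fun p => b (fst (fst p))) (t, x, y)).
  - apply (filter_imp (fun q : R * R * R => fst (fst q) < t0)).
    + intros [[t' x'] y'] H z. simpl in H. apply (Hf t' x' y' z H).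
    + apply (loc_p3 (fun s => s < t0)). apply locally_lt; auto.
  - apply (continuous_comp (fun q : R * R * R => fst (fst q)) a). apply cont_p3. exact Ha.
  - apply (continuous_comp (fun q : R * R * R => fst (fst q)) b). apply cont_p3. exact Hb.
Qed.

Lemma C2_RInt (h : R -> R -> R -> R) (a b : R -> R) (t0 t x : R) :
  t < t0 -> (forall t x y, t < t0 -> cont3 h t x y) ->
  continuous a t -> continuous b t ->
  C2 (fun t x => RInt (h t x) (a t) (b t)) t x.
Proof.
  intros Ht Hf Ha Hb. unfold C2.
  apply (cont_RInt_param (fun p : R * R => h (fst p) (snd p))
           (fun p => a (fst p)) (fun p => b (fst p)) (t, x)).
  - apply (filter_imp (fun q : R * R => fst q < t0)).
    + intros [t' x'] H z. simpl in H. apply (Hf t' x' z H).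
    + apply (loc_p2 (fun s => s < t0)). apply locally_lt; auto.
  - apply (continuous_comp (fun q : R * R => fst q) a). apply cont_fst. exact Ha.
  - apply (continuous_comp (fun q : R * R => fst q) b). apply cont_fst. exact Hb.
Qed.

Lemma cont1_RInt (h : R -> R -> R) (a b : R) (x : R) :
  (forall x' y, C2 h x' y) -> continuous (fun x => RInt (h x) a b) x.
Proof.
  intros Hf.
  apply (cont_RInt_param h (fun _ => a) (fun _ => b) x).
  - apply filter_forall. intros p y. apply Hf.
  - apply continuous_const.
  - apply continuous_const.
Qed.

Lemma cont4_tz f t x y z : cont4 f t x y z -> C2 (fun t' z' => f t' x y z') t z.
Proof.
  intro H. unfold C2.
  apply (continuous_comp (fun q : R * R => (fst q, x, y, snd q))
     (fun q : R * R * R * R => f (fst (fst (fst q))) (snd (fst (fst q))) (snd (fst q)) (snd q))).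
  - apply cont_pair; [apply cont_pair; [apply cont_pair|]|].
    apply cont_fst. apply continuous_const. apply continuous_const. apply cont_snd.
  - exact H.
Qed.

Lemma cont4_yz f t x y z : cont4 f t x y z -> C2 (fun y' z' => f t x y' z') y z.
Proof.
  intro H. unfold C2.
  apply (continuous_comp (fun q : R * R => (t, x, fst q, snd q))
     (fun q : R * R * R * R => f (fst (fst (fst q))) (snd (fst (fst q))) (snd (fst q)) (snd q))).
  - apply cont_pair; [apply cont_pair; [apply cont_pair|]|].
    apply continuous_const. apply continuous_const. apply cont_fst. apply cont_snd.
  - exact H.
Qed.

Lemma cont4_xz f t x y z : cont4 f t x y z -> C2 (fun x' z' => f t x' y z') x z.
Proof.
  intro H. unfold C2.
  apply (continuous_comp (fun q : R * R => (t, fst q, y, snd q))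
     (fun q : R * R * R * R => f (fst (fst (fst q))) (snd (fst (fst q))) (snd (fst q)) (snd q))).
  - apply cont_pair; [apply cont_pair; [apply cont_pair|]|].
    apply continuous_const. apply cont_fst. apply continuous_const. apply cont_snd.
  - exact H.
Qed.

Lemma cont3_ty h t x y : cont3 h t x y -> C2 (fun t' y' => h t' x y') t y.
Proof.
  intro H. unfold C2.
  apply (continuous_comp (fun q : R * R => (fst q, x, snd q))
     (fun q : R * R * R => h (fst (fst q)) (snd (fst q)) (snd q))).
  - apply cont_pair; [apply cont_pair|]. apply cont_fst. apply continuous_const. apply cont_snd.
  - exact H.
Qed.

Lemma cont3_xy h t x y : cont3 h t x y -> C2 (fun x' y' => h t x' y') x y.
Proof.
  intro H. unfold C2.
  apply (continuous_comp (fun q : R * R => (t, fst q, snd q))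
     (fun q : R * R * R => h (fst (fst q)) (snd (fst q)) (snd q))).
  - apply cont_pair; [apply cont_pair|]. apply continuous_const. apply cont_fst. apply cont_snd.
  - exact H.
Qed.

Lemma cont4_comp3 f (a : R -> R) t x y :
  cont4 f t x y (a t) -> continuous a t -> cont3 (fun t x y => f t x y (a t)) t x y.
Proof.
  intros H Ha. unfold cont3.
  apply (continuous_comp (fun q : R * R * R => (q, a (fst (fst q))))
     (fun q : R * R * R * R => f (fst (fst (fst q))) (snd (fst (fst q))) (snd (fst q)) (snd q))).
  - apply cont_pair. apply continuous_id.
    apply (continuous_comp (fun q : R * R * R => fst (fst q)) a). apply cont_p3. exact Ha.
  - exact H.
Qed.

Lemma cont3_comp2 h (a : R -> R) t x :
  cont3 h t x (a t) -> continuous a t -> C2 (fun t x => h t x (a t)) t x.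
Proof.
  intros H Ha. unfold C2.
  apply (continuous_comp (fun q : R * R => (q, a (fst q)))
     (fun q : R * R * R => h (fst (fst q)) (snd (fst q)) (snd q))).
  - apply cont_pair. apply continuous_id.
    apply (continuous_comp (fun q : R * R => fst q) a). apply cont_fst. exact Ha.
  - destruct (t, x) eqn:E. injection E; intros; subst. exact H.
Qed.

Lemma C2_sec2 h t x : C2 h t x -> continuous (h t) x.
Proof. intro H. apply (cont_section h t x). exact H. Qed.

Lemma C2_sec1 h t x : C2 h t x -> continuous (fun t' => h t' x) t.
Proof.
  intro H. apply (continuous_comp_2 (fun t' => t') (fun _ => x) h t); auto.
  apply continuous_id. apply continuous_const.
Qed.

Definition C1on (t0 : R) (f ft fx fy fz : R -> R -> R -> R -> R) : Prop :=
  forall t x y z, t < t0 ->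
     is_derive (fun s => f s x y z) t (ft t x y z) /\
     is_derive (fun s => f t s y z) x (fx t x y z) /\
     is_derive (fun s => f t x s z) y (fy t x y z) /\
     is_derive (fun s => f t x y s) z (fz t x y z) /\
     cont4 f t x y z /\ cont4 ft t x y z /\ cont4 fx t x y z /\
     cont4 fy t x y z /\ cont4 fz t x y z.

Lemma c4_plus f g t x y z : cont4 f t x y z -> cont4 g t x y z ->
  cont4 (fun t x y z => f t x y z + g t x y z) t x y z.
Proof. intros; apply cont_Rplus; auto. Qed.
Lemma c4_minus f g t x y z : cont4 f t x y z -> cont4 g t x y z ->
  cont4 (fun t x y z => f t x y z - g t x y z) t x y z.
Proof. intros; apply cont_Rminus; auto. Qed.
Lemma c4_mult f g t x y z : cont4 f t x y z -> cont4 g t x y z ->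
  cont4 (fun t x y z => f t x y z * g t x y z) t x y z.
Proof. intros; apply cont_Rmult; auto. Qed.
Lemma c4_const k t x y z : cont4 (fun _ _ _ _ => k) t x y z.
Proof. apply continuous_const. Qed.

Lemma c3_plus f g t x y : cont3 f t x y -> cont3 g t x y ->
  cont3 (fun t x y => f t x y + g t x y) t x y.
Proof. intros; apply cont_Rplus; auto. Qed.
Lemma c3_minus f g t x y : cont3 f t x y -> cont3 g t x y ->
  cont3 (fun t x y => f t x y - g t x y) t x y.
Proof. intros; apply cont_Rminus; auto. Qed.
Lemma c3_mult f g t x y : cont3 f t x y -> cont3 g t x y ->
  cont3 (fun t x y => f t x y * g t x y) t x y.
Proof. intros; apply cont_Rmult; auto. Qed.
Lemma c3_const k t x y : cont3 (fun _ _ _ => k) t x y.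
Proof. apply continuous_const. Qed.

Lemma c2_plus f g t x : C2 f t x -> C2 g t x -> C2 (fun t x => f t x + g t x) t x.
Proof. intros; apply cont_Rplus; auto. Qed.
Lemma c2_minus f g t x : C2 f t x -> C2 g t x -> C2 (fun t x => f t x - g t x) t x.
Proof. intros; apply cont_Rminus; auto. Qed.
Lemma c2_mult f g t x : C2 f t x -> C2 g t x -> C2 (fun t x => f t x * g t x) t x.
Proof. intros; apply cont_Rmult; auto. Qed.
Lemma c2_const k t x : C2 (fun _ _ => k) t x.
Proof. apply continuous_const. Qed.

Lemma cont_lin (p q x : R) : continuous (fun s => p + q * s) x.
Proof. apply cont_Rplus. apply continuous_const. apply cont_Rmult. apply continuous_const. apply continuous_id. Qed.
Lemma c3_opp f t x y : cont3 f t x y -> cont3 (fun t x y => - f t x y) t x y.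
Proof. intros; apply cont_Ropp; auto. Qed.

End Mod_G2.
Import Mod_G2.

Module Mod_G3.
Open Scope R_scope.
Open Scope R_scope.

Lemma dR_val (f : R -> R) (x a b : R) : is_derive f x a -> a = b -> is_derive f x b.
Proof. intros H ->; exact H. Qed.
Lemma dR_plus (f g : R -> R) (x a b : R) :
  is_derive f x a -> is_derive g x b -> is_derive (fun s => f s + g s) x (a + b).
Proof. intros. apply (is_derive_plus (V := R_NormedModule)); auto. Qed.
Lemma dR_minus (f g : R -> R) (x a b : R) :
  is_derive f x a -> is_derive g x b -> is_derive (fun s => f s - g s) x (a - b).
Proof. intros. apply (is_derive_minus (V := R_NormedModule)); auto. Qed.
Lemma dR_mult (f g : R -> R) (x a b : R) :
  is_derive f x a -> is_derive g x b -> is_derive (fun s => f s * g s) x (a * g x + f x * b).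
Proof. intros. apply (is_derive_mult f g); auto. intros; apply Rmult_comm. Qed.
Lemma dR_scal (f : R -> R) (x k a : R) :
  is_derive f x a -> is_derive (fun s => k * f s) x (k * a).
Proof. intros. apply is_derive_scal; auto. Qed.
Lemma dR_const (c x : R) : is_derive (fun _ => c) x 0.
Proof. apply (is_derive_const (V := R_NormedModule)). Qed.
Lemma dR_lin (p q x : R) : is_derive (fun s => p + q * s) x q.
Proof.
  apply (dR_val _ x (0 + q * 1) q); [|rewrite Rmult_1_r, Rplus_0_l; reflexivity]. apply (dR_plus (fun _ => p) (fun s => q * s)).
  apply dR_const. apply dR_scal. apply (is_derive_id (K := R_AbsRing)).
Qed.

Lemma RInt_Rplus (f g : R -> R) a b :
  ex_RInt f a b -> ex_RInt g a b -> RInt (fun z => f z + g z) a b = RInt f a b + RInt g a b.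
Proof. intros. apply (RInt_plus (V := R_CompleteNormedModule)); auto. Qed.
Lemma RInt_Ropp (f : R -> R) a b :
  ex_RInt f a b -> RInt (fun z => - f z) a b = - RInt f a b.
Proof. intros. apply (RInt_opp (V := R_CompleteNormedModule)); auto. Qed.
Lemma RInt_Rscal (f : R -> R) k a b :
  ex_RInt f a b -> RInt (fun z => k * f z) a b = k * RInt f a b.
Proof. intros. apply (RInt_scal (V := R_CompleteNormedModule)); auto. Qed.
Lemma RInt_Rminus (f g : R -> R) a b :
  ex_RInt f a b -> ex_RInt g a b -> RInt (fun z => f z - g z) a b = RInt f a b - RInt g a b.
Proof. intros. apply (RInt_minus (V := R_CompleteNormedModule)); auto. Qed.
Lemma RInt_zero (f : R -> R) a b : (forall z, f z = 0) -> RInt f a b = 0.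
Proof.
  intros H. rewrite (RInt_ext f (fun _ => 0)) by auto. rewrite RInt_const.
  apply Rmult_0_r.
Qed.
Lemma ex_RInt_cont (f : R -> R) a b : (forall z, continuous f z) -> ex_RInt f a b.
Proof. intros H. apply (ex_RInt_continuous (V := R_CompleteNormedModule)). intros; apply H. Qed.

Lemma RInt_FTC (F f : R -> R) a b :
  (forall z, is_derive F z (f z)) -> (forall z, continuous f z) -> @eq R (RInt f a b) (F b - F a).
Proof.
  intros Hd Hc. apply is_RInt_unique. apply (is_RInt_derive (V := R_CompleteNormedModule)); auto.
Qed.

Lemma RInt_ge_scal (f g : R -> R) k a b :
  a <= b -> ex_RInt f a b -> ex_RInt g a b ->
  (forall z, a <= z <= b -> k * g z <= f z) -> k * RInt g a b <= RInt f a b.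
Proof.
  intros Hab Hf Hg H. rewrite <- RInt_Rscal by auto.
  apply RInt_le; auto.
  apply (ex_RInt_scal (V := R_NormedModule)) with (k := k) in Hg. exact Hg.
  intros; apply H; lra.
Qed.
Lemma RInt_le_scal (f g : R -> R) k a b :
  a <= b -> ex_RInt f a b -> ex_RInt g a b ->
  (forall z, a <= z <= b -> f z <= k * g z) -> RInt f a b <= k * RInt g a b.
Proof.
  intros Hab Hf Hg H. rewrite <- RInt_Rscal by auto.
  apply RInt_le; auto.
  apply (ex_RInt_scal (V := R_NormedModule)) with (k := k) in Hg. exact Hg.
  intros; apply H; lra.
Qed.
Lemma RInt_nonneg (f : R -> R) a b :
  a <= b -> ex_RInt f a b -> (forall z, a <= z <= b -> 0 <= f z) -> 0 <= RInt f a b.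
Proof.
  intros Hab Hf H. rewrite <- (RInt_zero (fun _ => 0) a b) by auto.
  apply RInt_le; auto. apply ex_RInt_cont. intros; apply continuous_const.
  intros; apply H; lra.
Qed.
Lemma RInt_nonpos (f : R -> R) a b :
  a <= b -> ex_RInt f a b -> (forall z, a <= z <= b -> f z <= 0) -> RInt f a b <= 0.
Proof.
  intros Hab Hf H. rewrite <- (RInt_zero (fun _ => 0) a b) by auto.
  apply RInt_le; auto. apply ex_RInt_cont. intros; apply continuous_const.
  intros; apply H; lra.
Qed.

Lemma RInt_zero_pt (f : R -> R) a b m :
  a < m < b -> (forall z, continuous f z) -> (forall z, a <= z <= b -> 0 <= f z) ->
  RInt f a b <= 0 -> f m = 0.
Proof.
  intros Hm Hc Hp HI. destruct (Rle_lt_or_eq_dec 0 (f m)) as [Hlt|Heq]; [apply Hp; lra| |auto].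
  exfalso.
  assert (he : 0 < f m / 2) by lra.
  pose proof (proj1 (filterlim_locally f (f m)) (Hc m) (mkposreal _ he)) as [d Hd].
  set (d' := Rmin d (Rmin (m - a) (b - m)) / 2).
  assert (Hd'1 : 0 < d').
  { unfold d'. apply Rdiv_lt_0_compat; [|lra]. apply Rmin_pos. apply cond_pos. apply Rmin_pos; lra. }
  assert (Hd'2 : d' < d).
  { unfold d'. pose proof (Rmin_l d (Rmin (m - a) (b - m))). pose proof (cond_pos d). lra. }
  assert (Hd'3 : d' < m - a /\ d' < b - m).
  { unfold d'. pose proof (Rmin_r d (Rmin (m - a) (b - m))).
    pose proof (Rmin_l (m - a) (b - m)). pose proof (Rmin_r (m - a) (b - m)). lra. }
  assert (Hex : forall u v, ex_RInt f u v) by (intros; apply ex_RInt_cont; auto).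
  rewrite <- (RInt_Chasles f a (m - d') b) in HI by auto.
  rewrite <- (RInt_Chasles f (m - d') (m + d') b) in HI by auto.
  change (RInt f a (m - d') + (RInt f (m - d') (m + d') + RInt f (m + d') b) <= 0) in HI.
  assert (0 <= RInt f a (m - d')) by (apply RInt_nonneg; auto; try lra; intros; apply Hp; lra).
  assert (0 <= RInt f (m + d') b) by (apply RInt_nonneg; auto; try lra; intros; apply Hp; lra).
  assert (f m / 2 * RInt (fun _ => 1) (m - d') (m + d') <= RInt f (m - d') (m + d')).
  { apply RInt_ge_scal; auto; try lra. apply ex_RInt_cont; intros; apply continuous_const.
    intros z Hz. assert (Hb : ball m d z).
    { change (Rabs (z - m) < d). apply Rabs_def1; lra. }
    specialize (Hd z Hb). change (Rabs (f z - f m) < f m / 2) in Hd.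
    apply Rabs_def2 in Hd. lra. }
  rewrite RInt_const in H1. change (scal (m + d' - (m - d')) 1) with ((m + d' - (m - d')) * 1) in H1.
  assert (0 < f m / 2 * ((m + d' - (m - d')) * 1)) by (apply Rmult_lt_0_compat; lra).
  lra.
Qed.

End Mod_G3.
Import Mod_G3.

Module Mod_U.
Open Scope R_scope.
Open Scope R_scope.

Ltac c4tac := repeat match goal with
  | |- cont4 (fun t x y z => @?f t x y z + @?g t x y z) _ _ _ _ => apply (c4_plus f g)
  | |- cont4 (fun t x y z => @?f t x y z - @?g t x y z) _ _ _ _ => apply (c4_minus f g)
  | |- cont4 (fun t x y z => @?f t x y z * @?g t x y z) _ _ _ _ => apply (c4_mult f g)
  | |- cont4 (fun _ _ _ _ => ?k) _ _ _ _ => apply (c4_const k)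
  | H : cont4 ?f ?a ?b ?c ?d |- cont4 (fun t x y z => ?f t x y z) ?a ?b ?c ?d => exact H
  | H : cont4 ?f ?a ?b ?c ?d |- cont4 ?f ?a ?b ?c ?d => exact H
  end.
Ltac dtac1 := match goal with
  | |- is_derive (fun s => @?f s + @?g s) _ _ => apply (dR_plus f g)
  | |- is_derive (fun s => @?f s - @?g s) _ _ => apply (dR_minus f g)
  | |- is_derive (fun s => @?f s * @?g s) _ _ => apply (dR_mult f g)
  | |- is_derive (fun _ => ?k) _ _ => apply (dR_const k)
  | H : is_derive ?f ?x _ |- is_derive ?f ?x _ => exact H
  end.
Ltac dtac := eapply dR_val; [repeat dtac1 | ].

Section Uniq.
Variables U0 c rho t0 : R.
Hypothesis Hc : 0 < c.
Hypothesis Hrho : 0 < rho.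
Variables W1 W1t W1x W1y W1z W2 W2t W2x W2y W2z W3 W3t W3x W3y W3z P Pt Px Py Pz
  : R -> R -> R -> R -> R.
Hypothesis C1W1 : C1on t0 W1 W1t W1x W1y W1z.
Hypothesis C1W2 : C1on t0 W2 W2t W2x W2y W2z.
Hypothesis C1W3 : C1on t0 W3 W3t W3x W3y W3z.
Hypothesis C1P : C1on t0 P Pt Px Py Pz.
Hypothesis H0 : forall t x y z, t <= 0 ->
  W1 t x y z = 0 /\ W2 t x y z = 0 /\ W3 t x y z = 0 /\ P t x y z = 0.
Hypothesis HPDE : forall t x y z, t < t0 ->
  W1t t x y z + U0 * W1x t x y z + / rho * Px t x y z = 0 /\
  W2t t x y z + U0 * W2x t x y z + / rho * Py t x y z = 0 /\
  W3t t x y z + U0 * W3x t x y z + / rho * Pz t x y z = 0 /\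
  Pt t x y z + U0 * Px t x y z + rho * c ^ 2 * (W1x t x y z + W2y t x y z + W3z t x y z) = 0.

Definition kap := rho * c ^ 2.
Lemma kap_pos : 0 < kap.
Proof. unfold kap. apply Rmult_lt_0_compat; auto. apply pow_lt; auto. Qed.

Definition e t x y z := rho / 2 * (W1 t x y z * W1 t x y z + W2 t x y z * W2 t x y z + W3 t x y z * W3 t x y z)
   + / (2 * kap) * (P t x y z * P t x y z).
Definition et t x y z := rho * (W1 t x y z * W1t t x y z + W2 t x y z * W2t t x y z + W3 t x y z * W3t t x y z)
   + / kap * (P t x y z * Pt t x y z).
Definition ex t x y z := rho * (W1 t x y z * W1x t x y z + W2 t x y z * W2x t x y z + W3 t x y z * W3x t x y z)
   + / kap * (P t x y z * Px t x y z).
Definition Fx t x y z := U0 * e t x y z + P t x y z * W1 t x y z.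
Definition Fxx t x y z := U0 * ex t x y z + (Px t x y z * W1 t x y z + P t x y z * W1x t x y z).
Definition Fy t x y z := P t x y z * W2 t x y z.
Definition Fyy t x y z := Py t x y z * W2 t x y z + P t x y z * W2y t x y z.
Definition Fz t x y z := P t x y z * W3 t x y z.
Definition Fzz t x y z := Pz t x y z * W3 t x y z + P t x y z * W3z t x y z.

Ltac getall t x y z Ht :=
  destruct (C1W1 t x y z Ht) as (?&?&?&?&?&?&?&?&?);
  destruct (C1W2 t x y z Ht) as (?&?&?&?&?&?&?&?&?);
  destruct (C1W3 t x y z Ht) as (?&?&?&?&?&?&?&?&?);
  destruct (C1P t x y z Ht) as (?&?&?&?&?&?&?&?&?).

Lemma ident t x y z : t < t0 -> et t x y z + Fxx t x y z + Fyy t x y z + Fzz t x y z = 0.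
Proof.
  intro Ht. destruct (HPDE t x y z Ht) as (E1&E2&E3&E4).
  pose proof kap_pos as Hk.
  unfold et, Fxx, ex, Fyy, Fzz.
  replace (W1t t x y z) with (- U0 * W1x t x y z - / rho * Px t x y z) by lra.
  replace (W2t t x y z) with (- U0 * W2x t x y z - / rho * Py t x y z) by lra.
  replace (W3t t x y z) with (- U0 * W3x t x y z - / rho * Pz t x y z) by lra.
  replace (Pt t x y z) with (- U0 * Px t x y z - kap * (W1x t x y z + W2y t x y z + W3z t x y z))
    by (unfold kap; lra).
  field. split; lra.
Qed.

Lemma e_nonneg t x y z : 0 <= e t x y z.
Proof.
  pose proof kap_pos. unfold e.
  apply Rplus_le_le_0_compat; apply Rmult_le_pos.
  - lra.
  - nra.
  - left; apply Rinv_0_lt_compat; lra.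
  - nra.
Qed.

Lemma fb (w a b p : R) : 0 <= a -> 0 <= b ->
  Rabs (p * w) <= c * (rho / 2 * (w * w + a + b) + / (2 * kap) * (p * p)).
Proof.
  intros Ha Hb. pose proof kap_pos.
  assert (E : c * (rho / 2 * (w * w + a + b) + / (2 * kap) * (p * p))
     = (rho * c * rho * c * w * w + p * p) / (2 * rho * c) + c * rho / 2 * (a + b)).
  { unfold kap. field. split; lra. }
  rewrite E.
  assert (Hrc : 0 < 2 * rho * c) by nra.
  assert (0 <= c * rho / 2 * (a + b)).
  { apply Rmult_le_pos; [|lra]. apply Rmult_le_pos; nra. }
  assert (Rabs (p * w) <= (rho * c * rho * c * w * w + p * p) / (2 * rho * c)).
  { apply Rmult_le_reg_r with (2 * rho * c); auto.
    replace ((rho * c * rho * c * w * w + p * p) / (2 * rho * c) * (2 * rho * c))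
      with (rho * c * rho * c * w * w + p * p) by (field; lra).
    pose proof (pow2_ge_0 (rho * c * w + p)). pose proof (pow2_ge_0 (rho * c * w - p)).
    destruct (Rcase_abs (p * w)) as [Hn|Hn];
      [rewrite Rabs_left by auto | rewrite Rabs_right by auto];
      nra. }
  lra.
Qed.

Lemma flux1 t x y z : Rabs (P t x y z * W1 t x y z) <= c * e t x y z.
Proof. unfold e. apply fb; nra. Qed.
Lemma flux2 t x y z : Rabs (P t x y z * W2 t x y z) <= c * e t x y z.
Proof.
  unfold e. replace (W1 t x y z * W1 t x y z + W2 t x y z * W2 t x y z + W3 t x y z * W3 t x y z)
   with (W2 t x y z * W2 t x y z + W1 t x y z * W1 t x y z + W3 t x y z * W3 t x y z) by ring.
  apply fb; nra.
Qed.
Lemma flux3 t x y z : Rabs (P t x y z * W3 t x y z) <= c * e t x y z.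
Proof.
  unfold e. replace (W1 t x y z * W1 t x y z + W2 t x y z * W2 t x y z + W3 t x y z * W3 t x y z)
   with (W3 t x y z * W3 t x y z + W1 t x y z * W1 t x y z + W2 t x y z * W2 t x y z) by ring.
  apply fb; nra.
Qed.

Lemma ce t x y z : t < t0 -> cont4 e t x y z.
Proof. intro Ht. getall t x y z Ht. unfold e. c4tac. Qed.
Lemma cet t x y z : t < t0 -> cont4 et t x y z.
Proof. intro Ht. getall t x y z Ht. unfold et. c4tac. Qed.
Lemma cFx t x y z : t < t0 -> cont4 Fx t x y z.
Proof. intro Ht. getall t x y z Ht. unfold Fx, e. c4tac. Qed.
Lemma cFxx t x y z : t < t0 -> cont4 Fxx t x y z.
Proof. intro Ht. getall t x y z Ht. unfold Fxx, ex. c4tac. Qed.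
Lemma cFy t x y z : t < t0 -> cont4 Fy t x y z.
Proof. intro Ht. getall t x y z Ht. unfold Fy. c4tac. Qed.
Lemma cFyy t x y z : t < t0 -> cont4 Fyy t x y z.
Proof. intro Ht. getall t x y z Ht. unfold Fyy. c4tac. Qed.
Lemma cFz t x y z : t < t0 -> cont4 Fz t x y z.
Proof. intro Ht. getall t x y z Ht. unfold Fz. c4tac. Qed.
Lemma cFzz t x y z : t < t0 -> cont4 Fzz t x y z.
Proof. intro Ht. getall t x y z Ht. unfold Fzz. c4tac. Qed.

Lemma de_t t x y z : t < t0 -> is_derive (fun s => e s x y z) t (et t x y z).
Proof. intro Ht. pose proof kap_pos. getall t x y z Ht. unfold e, et. dtac. field; lra. Qed.
Lemma dFx_x t x y z : t < t0 -> is_derive (fun s => Fx t s y z) x (Fxx t x y z).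
Proof. intro Ht. pose proof kap_pos. getall t x y z Ht. unfold Fx, Fxx, e, ex. dtac. field; lra. Qed.
Lemma dFy_y t x y z : t < t0 -> is_derive (fun s => Fy t x s z) y (Fyy t x y z).
Proof. intro Ht. pose proof kap_pos. getall t x y z Ht. unfold Fy, Fyy. dtac. field; lra. Qed.
Lemma dFz_z t x y z : t < t0 -> is_derive (fun s => Fz t x y s) z (Fzz t x y z).
Proof. intro Ht. pose proof kap_pos. getall t x y z Ht. unfold Fz, Fzz. dtac. field; lra. Qed.

Lemma contz f t x y : t < t0 -> (forall t x y z, t < t0 -> cont4 f t x y z) ->
  forall z, continuous (f t x y) z.
Proof. intros Ht Hf z. apply (C2_sec2 (fun y' z' => f t x y' z') y z). apply cont4_yz. auto. Qed.

Section Box.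
Variables Rb X Y Z : R.
Definition x1 t := (X - Rb) + (U0 + c) * t.
Definition x2 t := (X + Rb) + (U0 - c) * t.
Definition y1 t := (Y - Rb) + c * t.
Definition y2 t := (Y + Rb) + (- c) * t.
Definition z1 t := (Z - Rb) + c * t.
Definition z2 t := (Z + Rb) + (- c) * t.

Definition I3 t x y := RInt (e t x y) (z1 t) (z2 t).
Definition D3 t x y := RInt (et t x y) (z1 t) (z2 t) - e t x y (z1 t) * c + e t x y (z2 t) * (- c).
Definition I2 t x := RInt (I3 t x) (y1 t) (y2 t).
Definition D2 t x := RInt (D3 t x) (y1 t) (y2 t) - I3 t x (y1 t) * c + I3 t x (y2 t) * (- c).
Definition EE t := RInt (I2 t) (x1 t) (x2 t).
Definition DE t := RInt (D2 t) (x1 t) (x2 t) - I2 t (x1 t) * (U0 + c) + I2 t (x2 t) * (U0 - c).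

Lemma cI3 t x y : t < t0 -> cont3 I3 t x y.
Proof. intro Ht. unfold I3. apply (cont3_RInt e z1 z2 t0); auto. apply ce. apply cont_lin. apply cont_lin. Qed.

Lemma cD3 t x y : t < t0 -> cont3 D3 t x y.
Proof.
  intro Ht. unfold D3. apply c3_plus; [apply c3_minus; [|apply c3_mult; [|apply c3_const]]|apply c3_mult; [|apply c3_const]].
  - apply (cont3_RInt et z1 z2 t0); auto. apply cet. apply cont_lin. apply cont_lin.
  - apply (cont4_comp3 e z1). apply ce; auto. apply cont_lin.
  - apply (cont4_comp3 e z2). apply ce; auto. apply cont_lin.
Qed.

Lemma dI3 t x y : t < t0 -> is_derive (fun s => I3 s x y) t (D3 t x y).
Proof.
  intro Ht. unfold I3, D3.
  apply (derive_param (fun s z => e s x y z) (fun s z => et s x y z) z1 z2 t0 t c (- c)); auto.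
  - intros; apply de_t; auto.
  - intros; apply cont4_tz; apply ce; auto.
  - intros; apply cont4_tz; apply cet; auto.
  - apply dR_lin.
  - apply dR_lin.
Qed.

Lemma cI2 t x : t < t0 -> C2 I2 t x.
Proof. intro Ht. unfold I2. apply (C2_RInt I3 y1 y2 t0); auto. apply cI3. apply cont_lin. apply cont_lin. Qed.

Lemma cD2 t x : t < t0 -> C2 D2 t x.
Proof.
  intro Ht. unfold D2. apply c2_plus; [apply c2_minus; [|apply c2_mult; [|apply c2_const]]|apply c2_mult; [|apply c2_const]].
  - apply (C2_RInt D3 y1 y2 t0); auto. apply cD3. apply cont_lin. apply cont_lin.
  - apply (cont3_comp2 I3 y1). apply cI3; auto. apply cont_lin.
  - apply (cont3_comp2 I3 y2). apply cI3; auto. apply cont_lin.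
Qed.

Lemma dI2 t x : t < t0 -> is_derive (fun s => I2 s x) t (D2 t x).
Proof.
  intro Ht. unfold I2, D2.
  apply (derive_param (fun s y => I3 s x y) (fun s y => D3 s x y) y1 y2 t0 t c (- c)); auto.
  - intros; apply dI3; auto.
  - intros; apply cont3_ty; apply cI3; auto.
  - intros; apply cont3_ty; apply cD3; auto.
  - apply dR_lin.
  - apply dR_lin.
Qed.

Lemma dEE t : t < t0 -> is_derive EE t (DE t).
Proof.
  intro Ht. unfold EE, DE.
  apply (derive_param I2 D2 x1 x2 t0 t (U0 + c) (U0 - c)); auto.
  - intros; apply dI2; auto.
  - intros; apply cI2; auto.
  - intros; apply cD2; auto.
  - apply dR_lin.
  - apply dR_lin.
Qed.

Definition A3x t x y := RInt (Fxx t x y) (z1 t) (z2 t).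
Definition A3y t x y := RInt (Fyy t x y) (z1 t) (z2 t).
Definition B3 t x y := - (c * e t x y (z2 t) + Fz t x y (z2 t)) - (c * e t x y (z1 t) - Fz t x y (z1 t)).

Lemma D3_eq t x y : t < t0 -> D3 t x y = - A3x t x y - A3y t x y + B3 t x y.
Proof.
  intro Ht. unfold D3.
  rewrite (RInt_ext (et t x y) (fun z => (- Fxx t x y z - Fyy t x y z) - Fzz t x y z)).
  2:{ intros z _. pose proof (ident t x y z Ht). lra. }
  assert (Hx : forall u v, ex_RInt (Fxx t x y) u v) by (intros; apply ex_RInt_cont; apply contz; auto; apply cFxx).
  assert (Hy : forall u v, ex_RInt (Fyy t x y) u v) by (intros; apply ex_RInt_cont; apply contz; auto; apply cFyy).
  assert (Hz : forall u v, ex_RInt (Fzz t x y) u v) by (intros; apply ex_RInt_cont; apply contz; auto; apply cFzz).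
  assert (Hox : ex_RInt (fun z => - Fxx t x y z) (z1 t) (z2 t)).
  { apply (ex_RInt_opp (V := R_NormedModule) (Fxx t x y)). auto. }
  assert (Hoxy : ex_RInt (fun z => - Fxx t x y z - Fyy t x y z) (z1 t) (z2 t)).
  { apply (ex_RInt_minus (V := R_NormedModule) (fun z => - Fxx t x y z) (Fyy t x y)); auto. }
  rewrite RInt_Rminus by auto. rewrite RInt_Rminus by auto. rewrite RInt_Ropp by auto.
  rewrite (RInt_FTC (Fz t x y) (Fzz t x y)).
  2:{ intros; apply dFz_z; auto. }
  2:{ apply contz; auto. apply cFzz. }
  unfold A3x, A3y, B3. ring.
Qed.

Definition J3 t x y := RInt (Fy t x y) (z1 t) (z2 t).
Definition J3x t x y := RInt (Fx t x y) (z1 t) (z2 t).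

Lemma dJ3 t x y : t < t0 -> is_derive (fun s => J3 t x s) y (A3y t x y).
Proof.
  intro Ht. unfold J3, A3y.
  eapply dR_val.
  apply (derive_param (fun s z => Fy t x s z) (fun s z => Fyy t x s z)
           (fun _ => z1 t) (fun _ => z2 t) (y + 1) y 0 0); try lra.
  - intros; apply dFy_y; auto.
  - intros; apply cont4_yz; apply cFy; auto.
  - intros; apply cont4_yz; apply cFyy; auto.
  - apply dR_const.
  - apply dR_const.
  - rewrite !Rmult_0_r, Rminus_0_r, Rplus_0_r. reflexivity.
Qed.

Lemma dJ3x t x y : t < t0 -> is_derive (fun s => J3x t s y) x (A3x t x y).
Proof.
  intro Ht. unfold J3x, A3x.
  eapply dR_val.
  apply (derive_param (fun s z => Fx t s y z) (fun s z => Fxx t s y z)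
           (fun _ => z1 t) (fun _ => z2 t) (x + 1) x 0 0); try lra.
  - intros; apply dFx_x; auto.
  - intros; apply cont4_xz; apply cFx; auto.
  - intros; apply cont4_xz; apply cFxx; auto.
  - apply dR_const.
  - apply dR_const.
  - rewrite !Rmult_0_r, Rminus_0_r, Rplus_0_r. reflexivity.
Qed.

Lemma cA3x t x y : t < t0 -> cont3 A3x t x y.
Proof. intro Ht. unfold A3x. apply (cont3_RInt Fxx z1 z2 t0); auto. apply cFxx. apply cont_lin. apply cont_lin. Qed.
Lemma cA3y t x y : t < t0 -> cont3 A3y t x y.
Proof. intro Ht. unfold A3y. apply (cont3_RInt Fyy z1 z2 t0); auto. apply cFyy. apply cont_lin. apply cont_lin. Qed.
Lemma cJ3 t x y : t < t0 -> cont3 J3 t x y.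
Proof. intro Ht. unfold J3. apply (cont3_RInt Fy z1 z2 t0); auto. apply cFy. apply cont_lin. apply cont_lin. Qed.
Lemma cJ3x t x y : t < t0 -> cont3 J3x t x y.
Proof. intro Ht. unfold J3x. apply (cont3_RInt Fx z1 z2 t0); auto. apply cFx. apply cont_lin. apply cont_lin. Qed.
Lemma cB3 t x y : t < t0 -> cont3 B3 t x y.
Proof.
  intro Ht. unfold B3.
  apply c3_minus; [apply c3_opp; apply c3_plus|apply c3_minus]; (apply c3_mult; [apply c3_const|]) || idtac.
  - apply (cont4_comp3 e z2). apply ce; auto. apply cont_lin.
  - apply (cont4_comp3 Fz z2). apply cFz; auto. apply cont_lin.
  - apply (cont4_comp3 e z1). apply ce; auto. apply cont_lin.
  - apply (cont4_comp3 Fz z1). apply cFz; auto. apply cont_lin.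
Qed.

Lemma cont3_y h t x y : cont3 h t x y -> continuous (h t x) y.
Proof. intro H. apply (C2_sec2 (fun x' y' => h t x' y') x y). apply cont3_xy. auto. Qed.
Lemma cont3_x h t x y : cont3 h t x y -> continuous (fun x => h t x y) x.
Proof. intro H. apply (C2_sec1 (fun x' y' => h t x' y') x y). apply cont3_xy. auto. Qed.

Definition B2 t x := RInt (B3 t x) (y1 t) (y2 t) - (c * I3 t x (y2 t) + J3 t x (y2 t))
   - (c * I3 t x (y1 t) - J3 t x (y1 t)).

Lemma D2_eq t x : t < t0 -> D2 t x = - RInt (A3x t x) (y1 t) (y2 t) + B2 t x.
Proof.
  intro Ht. unfold D2.
  rewrite (RInt_ext (D3 t x) (fun y => (- A3x t x y - A3y t x y) + B3 t x y)).
  2:{ intros y _. apply D3_eq; auto. }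
  assert (Hx : forall u v, ex_RInt (A3x t x) u v) by (intros; apply ex_RInt_cont; intro; apply cont3_y; apply cA3x; auto).
  assert (Hy : forall u v, ex_RInt (A3y t x) u v) by (intros; apply ex_RInt_cont; intro; apply cont3_y; apply cA3y; auto).
  assert (Hb : forall u v, ex_RInt (B3 t x) u v) by (intros; apply ex_RInt_cont; intro; apply cont3_y; apply cB3; auto).
  assert (Hox : ex_RInt (fun z => - A3x t x z) (y1 t) (y2 t)).
  { apply (ex_RInt_opp (V := R_NormedModule) (A3x t x)). auto. }
  assert (Hoxy : ex_RInt (fun z => - A3x t x z - A3y t x z) (y1 t) (y2 t)).
  { apply (ex_RInt_minus (V := R_NormedModule) (fun z => - A3x t x z) (A3y t x)); auto. }
  rewrite RInt_Rplus by auto. rewrite RInt_Rminus by auto. rewrite RInt_Ropp by auto.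
  rewrite (RInt_FTC (J3 t x) (A3y t x) (y1 t) (y2 t)).
  2:{ intros; apply dJ3; auto. }
  2:{ intro; apply cont3_y; apply cA3y; auto. }
  unfold B2. ring.
Qed.

Definition K2 t x := RInt (J3x t x) (y1 t) (y2 t).
Definition G2 t x := RInt (A3x t x) (y1 t) (y2 t).

Lemma dK2 t x : t < t0 -> is_derive (fun s => K2 t s) x (G2 t x).
Proof.
  intro Ht. unfold K2, G2.
  eapply dR_val.
  apply (derive_param (fun s y => J3x t s y) (fun s y => A3x t s y)
           (fun _ => y1 t) (fun _ => y2 t) (x + 1) x 0 0); try lra.
  - intros; apply dJ3x; auto.
  - intros; apply cont3_xy; apply cJ3x; auto.
  - intros; apply cont3_xy; apply cA3x; auto.
  - apply dR_const.
  - apply dR_const.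
  - rewrite !Rmult_0_r, Rminus_0_r, Rplus_0_r. reflexivity.
Qed.

Lemma cG2 t x : t < t0 -> continuous (G2 t) x.
Proof.
  intro Ht. unfold G2. apply (cont1_RInt (fun s y => A3x t s y)).
  intros; apply cont3_xy; apply cA3x; auto.
Qed.

Lemma cB2 t x : t < t0 -> continuous (B2 t) x.
Proof.
  intro Ht. unfold B2.
  apply (cont_Rminus (fun x => RInt (B3 t x) (y1 t) (y2 t) - (c * I3 t x (y2 t) + J3 t x (y2 t)))
                     (fun x => c * I3 t x (y1 t) - J3 t x (y1 t))).
  apply (cont_Rminus (fun x => RInt (B3 t x) (y1 t) (y2 t)) (fun x => c * I3 t x (y2 t) + J3 t x (y2 t))).
  - apply (cont1_RInt (fun s y => B3 t s y)). intros; apply cont3_xy; apply cB3; auto.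
  - apply (cont_Rplus (fun x => c * I3 t x (y2 t)) (fun x => J3 t x (y2 t))).
    apply (cont_Rmult (fun _ => c) (fun x => I3 t x (y2 t))). apply continuous_const.
    apply cont3_x; apply cI3; auto.
    apply cont3_x; apply cJ3; auto.
  - apply (cont_Rminus (fun x => c * I3 t x (y1 t)) (fun x => J3 t x (y1 t))).
    apply (cont_Rmult (fun _ => c) (fun x => I3 t x (y1 t))). apply continuous_const.
    apply cont3_x; apply cI3; auto.
    apply cont3_x; apply cJ3; auto.
Qed.

Lemma DE_eq t : t < t0 -> DE t = RInt (B2 t) (x1 t) (x2 t)
   + ((U0 - c) * I2 t (x2 t) - K2 t (x2 t)) + (K2 t (x1 t) - (U0 + c) * I2 t (x1 t)).
Proof.
  intro Ht. unfold DE.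
  rewrite (RInt_ext (D2 t) (fun x => - G2 t x + B2 t x)).
  2:{ intros x _. apply D2_eq; auto. }
  assert (Hg : forall u v, ex_RInt (G2 t) u v) by (intros; apply ex_RInt_cont; intro; apply cG2; auto).
  assert (Hb : forall u v, ex_RInt (B2 t) u v) by (intros; apply ex_RInt_cont; intro; apply cB2; auto).
  assert (Ho : ex_RInt (fun z => - G2 t z) (x1 t) (x2 t)).
  { apply (ex_RInt_opp (V := R_NormedModule) (G2 t)). auto. }
  rewrite RInt_Rplus by auto. rewrite RInt_Ropp by auto.
  rewrite (RInt_FTC (K2 t) (G2 t) (x1 t) (x2 t)).
  2:{ intros; apply dK2; auto. }
  2:{ intro; apply cG2; auto. }
  ring.
Qed.

Lemma Rabs_bounds a b : Rabs a <= b -> - b <= a <= b.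
Proof. intro H. pose proof (Rle_abs (- a)) as Ha. rewrite Rabs_Ropp in Ha. pose proof (Rle_abs a). lra. Qed.

Lemma DE_nonpos t : t < t0 -> 0 <= Rb - c * t -> DE t <= 0.
Proof.
  intros Ht Hh. rewrite DE_eq by auto.
  assert (Hx : x1 t <= x2 t) by (unfold x1, x2; lra).
  assert (Hy : y1 t <= y2 t) by (unfold y1, y2; lra).
  assert (Hz : z1 t <= z2 t) by (unfold z1, z2; lra).
  assert (exe : forall x y, ex_RInt (e t x y) (z1 t) (z2 t)) by (intros; apply ex_RInt_cont; apply contz; auto; apply ce).
  assert (exFx : forall x y, ex_RInt (Fx t x y) (z1 t) (z2 t)) by (intros; apply ex_RInt_cont; apply contz; auto; apply cFx).
  assert (exFy : forall x y, ex_RInt (Fy t x y) (z1 t) (z2 t)) by (intros; apply ex_RInt_cont; apply contz; auto; apply cFy).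
  assert (exI3 : forall x, ex_RInt (I3 t x) (y1 t) (y2 t)) by (intros; apply ex_RInt_cont; intro; apply cont3_y; apply cI3; auto).
  assert (exJ3x : forall x, ex_RInt (J3x t x) (y1 t) (y2 t)) by (intros; apply ex_RInt_cont; intro; apply cont3_y; apply cJ3x; auto).
  assert (exB3 : forall x, ex_RInt (B3 t x) (y1 t) (y2 t)) by (intros; apply ex_RInt_cont; intro; apply cont3_y; apply cB3; auto).
  assert (T1 : RInt (B2 t) (x1 t) (x2 t) <= 0).
  { apply RInt_nonpos; auto. apply ex_RInt_cont; intro; apply cB2; auto.
    intros x _. unfold B2.
    assert (RInt (B3 t x) (y1 t) (y2 t) <= 0).
    { apply RInt_nonpos; auto. intros y _. unfold B3.
      pose proof (Rabs_bounds _ _ (flux3 t x y (z2 t))).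
      pose proof (Rabs_bounds _ _ (flux3 t x y (z1 t))). unfold Fz. lra. }
    assert (- c * I3 t x (y2 t) <= J3 t x (y2 t)).
    { apply RInt_ge_scal; auto. intros z _. pose proof (Rabs_bounds _ _ (flux2 t x (y2 t) z)). unfold Fy. lra. }
    assert (J3 t x (y1 t) <= c * I3 t x (y1 t)).
    { apply RInt_le_scal; auto. intros z _. pose proof (Rabs_bounds _ _ (flux2 t x (y1 t) z)). unfold Fy. lra. }
    lra. }
  assert (T2 : (U0 - c) * I2 t (x2 t) <= K2 t (x2 t)).
  { apply RInt_ge_scal; auto. intros y _. apply RInt_ge_scal; auto. intros z _.
    pose proof (Rabs_bounds _ _ (flux1 t (x2 t) y z)). unfold Fx. lra. }
  assert (T3 : K2 t (x1 t) <= (U0 + c) * I2 t (x1 t)).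
  { apply RInt_le_scal; auto. intros y _. apply RInt_le_scal; auto. intros z _.
    pose proof (Rabs_bounds _ _ (flux1 t (x1 t) y z)). unfold Fx. lra. }
  lra.
Qed.

Lemma e_zero0 x y z : e 0 x y z = 0.
Proof. destruct (H0 0 x y z (Rle_refl 0)) as (A1&A2&A3&A4). unfold e. rewrite A1, A2, A3, A4. ring. Qed.

Lemma EE0 : EE 0 = 0.
Proof.
  unfold EE. apply RInt_zero. intro x. unfold I2. apply RInt_zero. intro y.
  unfold I3. apply RInt_zero. intro z. apply e_zero0.
Qed.

Lemma I3_nonneg t x y : t < t0 -> 0 <= Rb - c * t -> 0 <= I3 t x y.
Proof.
  intros Ht Hh. unfold I3. apply RInt_nonneg. unfold z1, z2; lra.
  apply ex_RInt_cont; apply contz; auto; apply ce. intros; apply e_nonneg.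
Qed.

Lemma I2_nonneg t x : t < t0 -> 0 <= Rb - c * t -> 0 <= I2 t x.
Proof.
  intros Ht Hh. unfold I2. apply RInt_nonneg. unfold y1, y2; lra.
  apply ex_RInt_cont; intro; apply cont3_y; apply cI3; auto. intros; apply I3_nonneg; auto.
Qed.

Lemma EE_le0 ts : 0 < ts < t0 -> 0 <= Rb - c * ts -> EE ts <= 0.
Proof.
  intros Hts Hh.
  destruct (MVT_gen EE 0 ts DE) as [c' [Hc' Heq]].
  - intros x Hx. rewrite Rmin_left, Rmax_right in Hx by lra. apply dEE. lra.
  - intros x Hx. rewrite Rmin_left, Rmax_right in Hx by lra. apply cont_to_pt.
    apply (ex_derive_continuous (K := R_AbsRing) (V := R_NormedModule)). exists (DE x). apply dEE. lra.
  - rewrite Rmin_left, Rmax_right in Hc' by lra.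
    assert (DE c' <= 0).
    { apply DE_nonpos. lra. assert (c * c' <= c * ts) by (apply Rmult_le_compat_l; lra). lra. }
    rewrite EE0 in Heq. nra.
Qed.

Lemma e_zero ts : 0 < ts < t0 -> Rb - c * ts = 1 -> e ts (X + U0 * ts) Y Z = 0.
Proof.
  intros Hts Hh.
  assert (Hl : 0 <= Rb - c * ts) by lra.
  assert (HI2 : I2 ts (X + U0 * ts) = 0).
  { apply (RInt_zero_pt (I2 ts) (x1 ts) (x2 ts)).
    - unfold x1, x2. lra.
    - intro; apply C2_sec2; apply cI2; lra.
    - intros; apply I2_nonneg; lra.
    - apply EE_le0; lra. }
  assert (HI3 : I3 ts (X + U0 * ts) Y = 0).
  { apply (RInt_zero_pt (I3 ts (X + U0 * ts)) (y1 ts) (y2 ts)).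
    - unfold y1, y2. lra.
    - intro; apply cont3_y; apply cI3; lra.
    - intros; apply I3_nonneg; lra.
    - unfold I2 in HI2. lra. }
  apply (RInt_zero_pt (e ts (X + U0 * ts) Y) (z1 ts) (z2 ts)).
  - unfold z1, z2. lra.
  - apply contz. lra. apply ce.
  - intros; apply e_nonneg.
  - unfold I3 in HI3. lra.
Qed.

End Box.

Lemma homog_zero t x y z : t < t0 ->
  W1 t x y z = 0 /\ W2 t x y z = 0 /\ W3 t x y z = 0 /\ P t x y z = 0.
Proof.
  intro Ht. destruct (Rle_or_lt t 0) as [Hle|Hlt]. { apply H0; auto. }
  pose proof (e_zero (c * t + 1) (x - U0 * t) y z t (conj Hlt Ht) ltac:(ring)) as He.
  replace (x - U0 * t + U0 * t) with x in He by ring.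
  unfold e in He. pose proof kap_pos.
  assert (Hi : 0 < / (2 * kap)) by (apply Rinv_0_lt_compat; lra).
  assert (HW : W1 t x y z * W1 t x y z + W2 t x y z * W2 t x y z + W3 t x y z * W3 t x y z = 0 /\
               P t x y z * P t x y z = 0).
  { assert (0 <= W1 t x y z * W1 t x y z) by nra. assert (0 <= W2 t x y z * W2 t x y z) by nra.
    assert (0 <= W3 t x y z * W3 t x y z) by nra. assert (0 <= P t x y z * P t x y z) by nra.
    split; nra. }
  destruct HW as [HW HP].
  repeat split; nra.
Qed.

End Uniq.

End Mod_U.
Import Mod_U.

Module Mod_G4.
Open Scope R_scope.
Open Scope R_scope.

Lemma left_lim_unique (f g : R -> R) t0 a b :
  filterlim f (at_left t0) (locally a) -> filterlim g (at_left t0) (locally b) ->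
  (forall s, s < t0 -> f s = g s) -> a = b.
Proof.
  intros Hf Hg Heq. apply Rminus_diag_uniq_sym.
  destruct (Req_dec (b - a) 0) as [|Hne]; auto. exfalso.
  assert (he : 0 < Rabs (b - a) / 2) by (apply Rdiv_lt_0_compat; [apply Rabs_pos_lt|]; lra).
  pose proof (proj1 (filterlim_locally f a) Hf (mkposreal _ he)) as [d1 H1].
  pose proof (proj1 (filterlim_locally g b) Hg (mkposreal _ he)) as [d2 H2].
  set (d := Rmin d1 d2).
  assert (Hd : 0 < d) by (apply Rmin_pos; apply cond_pos).
  set (y := t0 - d / 2).
  assert (Hy1 : ball t0 d1 y).
  { change (Rabs (y - t0) < d1). unfold y. rewrite Rabs_left by lra.
    pose proof (Rmin_l d1 d2). fold d in H. lra. }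
  assert (Hy2 : ball t0 d2 y).
  { change (Rabs (y - t0) < d2). unfold y. rewrite Rabs_left by lra.
    pose proof (Rmin_r d1 d2). fold d in H. lra. }
  assert (Hyl : y < t0) by (unfold y; lra).
  specialize (H1 y Hy1 Hyl). specialize (H2 y Hy2 Hyl).
  change (Rabs (f y - a) < Rabs (b - a) / 2) in H1.
  change (Rabs (g y - b) < Rabs (b - a) / 2) in H2.
  rewrite Heq in H1 by auto.
  assert (Rabs (b - a) <= Rabs (g y - a) + Rabs (g y - b)).
  { replace (b - a) with ((g y - a) - (g y - b)) by ring.
    eapply Rle_trans; [apply Rabs_triang|]. rewrite Rabs_Ropp. lra. }
  lra.
Qed.

Lemma C1on_minus t0 f ft fx fy fz g gt gx gy gz :
  C1on t0 f ft fx fy fz -> C1on t0 g gt gx gy gz ->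
  C1on t0 (fun t x y z => f t x y z - g t x y z) (fun t x y z => ft t x y z - gt t x y z)
    (fun t x y z => fx t x y z - gx t x y z) (fun t x y z => fy t x y z - gy t x y z)
    (fun t x y z => fz t x y z - gz t x y z).
Proof.
  intros Hf Hg t x y z Ht.
  destruct (Hf t x y z Ht) as (a1&a2&a3&a4&a5&a6&a7&a8&a9).
  destruct (Hg t x y z Ht) as (b1&b2&b3&b4&b5&b6&b7&b8&b9).
  split; [apply dR_minus; auto|]. split; [apply dR_minus; auto|].
  split; [apply dR_minus; auto|]. split; [apply dR_minus; auto|].
  split; [apply c4_minus; auto|]. split; [apply c4_minus; auto|].
  split; [apply c4_minus; auto|]. split; [apply c4_minus; auto|].
  apply c4_minus; auto.
Qed.

Lemma IsSol_unique U0 c0 rho0 wf A t0 v w :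
  0 < c0 -> 0 < rho0 ->
  IsSol U0 c0 rho0 wf A t0 v -> IsSol U0 c0 rho0 wf A t0 w ->
  forall t x y z, t <= t0 ->
    vx w t x y z = vx v t x y z /\ vy w t x y z = vy v t x y z /\
    vz w t x y z = vz v t x y z /\ pp w t x y z = pp v t x y z.
Proof.
  intros Hc Hr [Z1 [a1 [a2 [a3 [a4 [a5 [a6 [a7 [a8 [a9 [a10 [a11 [a12 [a13 [a14 [a15 [a16 [Ca1 [Ca2 [Ca3 [Ca4 Pa]]]]]]]]]]]]]]]]]]]]]
              [Z2 [b1 [b2 [b3 [b4 [b5 [b6 [b7 [b8 [b9 [b10 [b11 [b12 [b13 [b14 [b15 [b16 [Cb1 [Cb2 [Cb3 [Cb4 Pb]]]]]]]]]]]]]]]]]]]]].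
  assert (Hz : forall t x y z, t < t0 ->
    vx w t x y z - vx v t x y z = 0 /\ vy w t x y z - vy v t x y z = 0 /\
    vz w t x y z - vz v t x y z = 0 /\ pp w t x y z - pp v t x y z = 0).
  { intros t x y z Ht.
    apply (homog_zero U0 c0 rho0 t0 Hc Hr _ _ _ _ _ _ _ _ _ _ _ _ _ _ _ _ _ _ _ _
      (C1on_minus _ _ _ _ _ _ _ _ _ _ _ (proj1 Cb1) (proj1 Ca1))
      (C1on_minus _ _ _ _ _ _ _ _ _ _ _ (proj1 Cb2) (proj1 Ca2))
      (C1on_minus _ _ _ _ _ _ _ _ _ _ _ (proj1 Cb3) (proj1 Ca3))
      (C1on_minus _ _ _ _ _ _ _ _ _ _ _ (proj1 Cb4) (proj1 Ca4))); auto.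
    - intros t' x' y' z' Ht'. destruct (Z1 t' x' y' z' Ht') as (e1&e2&e3&e4).
      destruct (Z2 t' x' y' z' Ht') as (f1&f2&f3&f4). simpl. lra.
    - intros t' x' y' z' Ht'. destruct (Pa t' x' y' z' Ht') as (e1&e2&e3&e4).
      destruct (Pb t' x' y' z' Ht') as (f1&f2&f3&f4). simpl. repeat split; nra. }
  intros t x y z Ht. destruct (Rle_lt_or_eq_dec _ _ Ht) as [Hlt|Heq].
  - destruct (Hz t x y z Hlt) as (h1&h2&h3&h4). repeat split; lra.
  - subst t.
    repeat split; eapply left_lim_unique;
      [apply (proj2 Cb1) | apply (proj2 Ca1) | intros s Hs; destruct (Hz s x y z Hs); lra
      |apply (proj2 Cb2) | apply (proj2 Ca2) | intros s Hs; destruct (Hz s x y z Hs) as (?&?&?&?); lra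
      |apply (proj2 Cb3) | apply (proj2 Ca3) | intros s Hs; destruct (Hz s x y z Hs) as (?&?&?&?); lra
      |apply (proj2 Cb4) | apply (proj2 Ca4) | intros s Hs; destruct (Hz s x y z Hs) as (?&?&?&?); lra].
Qed.

End Mod_G4.
Import Mod_G4.

Module Mod_M.
Open Scope R_scope.
Open Scope R_scope.

Lemma deriv_max (h dh : R -> R) t :
  (forall u, is_derive h u (dh u)) -> dh 0 = 0 ->
  is_derive (fun u => h (Rmax u 0)) t (dh (Rmax t 0)).
Proof.
  intros Hd H0.
  destruct (Rtotal_order t 0) as [Hlt|[Heq|Hgt]].
  - rewrite Rmax_right by lra. rewrite H0.
    apply (is_derive_ext_loc (fun _ => h 0)).
    + destruct (locally_lt t 0 Hlt) as [d Hd']. exists d. intros u Hu.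
      rewrite Rmax_right; auto. left. apply Hd'. exact Hu.
    + apply dR_const.
  - subst t. rewrite Rmax_right by lra. rewrite H0.
    apply is_derive_Reals. intros eps Heps.
    pose proof (proj1 (is_derive_Reals h 0 (dh 0)) (Hd 0) eps Heps) as [d Hd'].
    exists d. intros k Hk Hkd. rewrite Rplus_0_l in *. rewrite (Rmax_right 0 0) by lra.
    destruct (Rle_or_lt k 0) as [Hk0|Hk0].
    + rewrite (Rmax_right k 0) by lra.
      replace ((h 0 - h 0) / k - 0) with 0 by (field; lra). rewrite Rabs_R0; auto.
    + rewrite Rmax_left by lra. specialize (Hd' k Hk Hkd). rewrite Rplus_0_l, H0 in Hd'. auto.
  - rewrite Rmax_left by lra.
    apply (is_derive_ext_loc h).
    + assert (Hl : locally t (fun u => 0 < u)).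
      { apply (open_gt 0 t Hgt). }
      destruct Hl as [d Hd']. exists d. intros u Hu.
      rewrite Rmax_left; auto. left. apply Hd'. exact Hu.
    + apply Hd.
Qed.

Lemma cont_Rmax0 t : continuous (fun u => Rmax u 0) t.
Proof.
  assert (E : forall u : R, (u + Rabs u) / 2 = Rmax u 0).
  { intro u. unfold Rmax. destruct (Rle_dec u 0).
    - rewrite Rabs_left1 by auto. field.
    - rewrite Rabs_right by lra. field. }
  apply (continuous_ext (fun u => (u + Rabs u) / 2)). { intro u; apply E. }
  apply (cont_Rmult (fun u => u + Rabs u) (fun _ => / 2)).
  apply cont_Rplus. apply continuous_id. apply continuous_Rabs. apply continuous_const.
Qed.

Section Mode.
Variables lam w : R.
Variables f df : R -> R.
Hypothesis Hf : forall s, is_derive f s (df s).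
Hypothesis Hdf : forall s, continuous df s.

Lemma cf s : continuous f s.
Proof. apply (ex_derive_continuous (K := R_AbsRing) (V := R_NormedModule)). exists (df s). apply Hf. Qed.

Definition Psi (t s : R) : R := RInt (fun u => f (s - lam * (t - u)) * sin (w * u)) 0 t.
Definition Psis (t s : R) : R := RInt (fun u => df (s - lam * (t - u)) * sin (w * u)) 0 t.
Definition Psit (t s : R) : R := f s * sin (w * t) - lam * Psis t s.

Lemma cont_comp_lin (h : R -> R) :
  (forall s, continuous h s) ->
  forall s t u, C2 (fun t u => h (s - lam * (t - u)) * sin (w * u)) t u.
Proof.
  intros Hh s t u. unfold C2.
  apply (cont_Rmult (fun q : R * R => h (s - lam * (fst q - snd q))) (fun q : R * R => sin (w * snd q))).
  - apply (continuous_comp (fun q : R * R => s - lam * (fst q - snd q)) h); [|apply Hh].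
    apply cont_Rminus. apply continuous_const. apply cont_Rmult. apply continuous_const.
    apply cont_Rminus. apply cont_fst. apply cont_snd.
  - apply (continuous_comp (fun q : R * R => w * snd q) sin); [|apply continuous_sin].
    apply cont_Rmult. apply continuous_const. apply cont_snd.
Qed.

Lemma cont_comp_lin2 (h : R -> R) :
  (forall s, continuous h s) ->
  forall t u s, C2 (fun s u => h (s - lam * (t - u)) * sin (w * u)) s u.
Proof.
  intros Hh t u s. unfold C2.
  apply (cont_Rmult (fun q : R * R => h (fst q - lam * (t - snd q))) (fun q : R * R => sin (w * snd q))).
  - apply (continuous_comp (fun q : R * R => fst q - lam * (t - snd q)) h); [|apply Hh].
    apply cont_Rminus. apply cont_fst. apply cont_Rmult. apply continuous_const.
    apply cont_Rminus. apply continuous_const. apply cont_snd.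
  - apply (continuous_comp (fun q : R * R => w * snd q) sin); [|apply continuous_sin].
    apply cont_Rmult. apply continuous_const. apply cont_snd.
Qed.

Lemma dPsi_t t s : is_derive (fun u => Psi u s) t (Psit t s).
Proof.
  unfold Psi, Psit.
  eapply dR_val.
  - apply (derive_param (fun t u => f (s - lam * (t - u)) * sin (w * u))
            (fun t u => (- lam) * (df (s - lam * (t - u)) * sin (w * u)))
            (fun _ => 0) (fun t => t) (t + 1) t 0 1); try lra.
    + intros t' u _. eapply dR_val.
      apply (dR_mult (fun t => f (s - lam * (t - u))) (fun _ => sin (w * u))).
      apply (is_derive_comp f (fun t => s - lam * (t - u))). apply Hf.
      apply dR_minus. apply dR_const.
      apply dR_scal. apply dR_minus. apply (is_derive_id (K := R_AbsRing)). apply dR_const.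
      apply dR_const. change one with 1. unfold scal; simpl; unfold mult; simpl. ring.
    + intros; apply cont_comp_lin. apply cf.
    + intros t' u _. unfold C2.
      apply (cont_Rmult (fun _ => - lam)). apply continuous_const.
      apply (cont_comp_lin df Hdf s t' u).
    + apply dR_const.
    + apply (is_derive_id (K := R_AbsRing)).
  - rewrite RInt_Rscal. 2:{ apply ex_RInt_cont. intro z. apply (C2_sec2 (fun t u => df (s - lam * (t - u)) * sin (w * u)) t z). apply (cont_comp_lin df Hdf). }
    replace (s - lam * (t - t)) with s by ring. unfold Psis. ring.
Qed.

Lemma dPsi_s t s : is_derive (fun u => Psi t u) s (Psis t s).
Proof.
  unfold Psi, Psis.
  eapply dR_val.
  - apply (derive_param (fun s u => f (s - lam * (t - u)) * sin (w * u))
            (fun s u => df (s - lam * (t - u)) * sin (w * u))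
            (fun _ => 0) (fun _ => t) (s + 1) s 0 0); try lra.
    + intros s' u _. eapply dR_val.
      apply (dR_mult (fun s => f (s - lam * (t - u))) (fun _ => sin (w * u))).
      apply (is_derive_comp f (fun s => s - lam * (t - u))). apply Hf.
      apply dR_minus. apply (is_derive_id (K := R_AbsRing)). apply dR_const.
      apply dR_const. change one with 1. unfold scal; simpl; unfold mult; simpl. ring.
    + intros; apply cont_comp_lin2. apply cf.
    + intros; apply cont_comp_lin2. auto.
    + apply dR_const.
    + apply dR_const.
  - rewrite !Rmult_0_r, Rminus_0_r, Rplus_0_r. reflexivity.
Qed.

Lemma cPsi_gen (h : R -> R) t s : (forall s, continuous h s) ->
  C2 (fun t s => RInt (fun u => h (s - lam * (t - u)) * sin (w * u)) 0 t) t s.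
Proof.
  intros Hh. unfold C2.
  apply (cont_RInt_param (fun p : R * R => fun u => h (snd p - lam * (fst p - u)) * sin (w * u))
     (fun _ => 0) (fun p => fst p) (t, s)).
  - apply filter_forall. intros [t' s'] u. simpl.
    apply (continuous_comp (fun q : R * R * R => (fst (fst q), snd (fst q), snd q))
            (fun q : R * R * R => h (snd (fst q) - lam * (fst (fst q) - snd q)) * sin (w * snd q))).
    + apply (continuous_ext (fun q => q)). intros [[a b] c]; reflexivity. apply continuous_id.
    + apply cont_Rmult.
      * apply (continuous_comp (fun q : R * R * R => snd (fst q) - lam * (fst (fst q) - snd q)) h); [|apply Hh].
        apply cont_Rminus. apply (continuous_comp fst snd). apply cont_fst. apply cont_snd.
        apply cont_Rmult. apply continuous_const. apply cont_Rminus.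
        apply (continuous_comp fst fst). apply cont_fst. apply cont_fst. apply cont_snd.
      * apply (continuous_comp (fun q : R * R * R => w * snd q) sin); [|apply continuous_sin].
        apply cont_Rmult. apply continuous_const. apply cont_snd.
  - apply continuous_const.
  - apply cont_fst.
Qed.


Lemma Psi0 s : Psi 0 s = 0.
Proof. unfold Psi. apply (RInt_point (V := R_CompleteNormedModule)). Qed.
Lemma Psis0 s : Psis 0 s = 0.
Proof. unfold Psis. apply (RInt_point (V := R_CompleteNormedModule)). Qed.
Lemma Psit0 s : Psit 0 s = 0.
Proof. unfold Psit. rewrite Psis0, Rmult_0_r, sin_0. ring. Qed.

Definition Phi (t s : R) : R := Psi (Rmax t 0) s.
Definition Phit (t s : R) : R := Psit (Rmax t 0) s.
Definition Phis (t s : R) : R := Psis (Rmax t 0) s.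

Lemma Phi_neg t s : t <= 0 -> Phi t s = 0.
Proof. intro H. unfold Phi. rewrite Rmax_right by auto. apply Psi0. Qed.

Lemma dPhi_t t s : is_derive (fun u => Phi u s) t (Phit t s).
Proof.
  unfold Phi, Phit. apply (deriv_max (fun u => Psi u s) (fun u => Psit u s)).
  intros; apply dPsi_t. apply Psit0.
Qed.

Lemma dPhi_s t s : is_derive (fun u => Phi t u) s (Phis t s).
Proof. unfold Phi, Phis. apply dPsi_s. Qed.

Lemma Phi_pde t s : Phit t s + lam * Phis t s = heaviside t * sin (w * t) * f s.
Proof.
  unfold Phit, Phis, heaviside. destruct (Rlt_dec 0 t) as [H|H].
  - rewrite Rmax_left by lra. unfold Psit. ring.
  - rewrite Rmax_right by lra. rewrite Psit0, Psis0. ring.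
Qed.

Lemma C2_max (h : R -> R -> R) t s : C2 h (Rmax t 0) s -> C2 (fun t s => h (Rmax t 0) s) t s.
Proof.
  intro H. unfold C2.
  apply (continuous_comp (fun q : R * R => (Rmax (fst q) 0, snd q)) (fun q : R * R => h (fst q) (snd q))).
  - apply cont_pair. apply (continuous_comp fst (fun u => Rmax u 0)). apply cont_fst. apply cont_Rmax0.
    apply cont_snd.
  - exact H.
Qed.

Lemma cPsi t s : C2 Psi t s.
Proof. apply (cPsi_gen f). apply cf. Qed.
Lemma cPsis t s : C2 Psis t s.
Proof. apply (cPsi_gen df). apply Hdf. Qed.
Lemma cPsit t s : C2 Psit t s.
Proof.
  unfold Psit, C2.
  apply (cont_Rminus (fun q : R * R => f (snd q) * sin (w * fst q)) (fun q => lam * Psis (fst q) (snd q))).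
  - apply cont_Rmult. apply (continuous_comp snd f). apply cont_snd. apply cf.
    apply (continuous_comp (fun q : R * R => w * fst q) sin); [|apply continuous_sin].
    apply cont_Rmult. apply continuous_const. apply cont_fst.
  - apply cont_Rmult. apply continuous_const. apply cPsis.
Qed.

Lemma cPhi t s : C2 Phi t s.
Proof. apply (C2_max Psi). apply cPsi. Qed.
Lemma cPhit t s : C2 Phit t s.
Proof. apply (C2_max Psit). apply cPsit. Qed.
Lemma cPhis t s : C2 Phis t s.
Proof. apply (C2_max Psis). apply cPsis. Qed.

End Mode.

Lemma Psi_diff_bound lam w (f g : R -> R) (t s M : R) :
  (forall s, continuous f s) -> (forall s, continuous g s) ->
  (forall s, Rabs (f s - g s) <= M) ->
  Rabs (Psi lam w f t s - Psi lam w g t s) <= Rabs t * M.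
Proof.
  intros Hf Hg HM. unfold Psi.
  assert (Cf : forall t s u, C2 (fun t u => f (s - lam * (t - u)) * sin (w * u)) t u)
    by (intros; apply cont_comp_lin; auto).
  assert (Cg : forall t s u, C2 (fun t u => g (s - lam * (t - u)) * sin (w * u)) t u)
    by (intros; apply cont_comp_lin; auto).
  rewrite <- RInt_Rminus.
  2:{ apply ex_RInt_cont. intro z. apply (C2_sec2 (fun t u => f (s - lam * (t - u)) * sin (w * u)) t z). auto. }
  2:{ apply ex_RInt_cont. intro z. apply (C2_sec2 (fun t u => g (s - lam * (t - u)) * sin (w * u)) t z). auto. }
  replace (Rabs t) with (Rabs (t - 0)) by (rewrite Rminus_0_r; auto).
  apply abs_RInt_le_gen.
  - apply ex_RInt_cont. intro z. apply cont_Rminus.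
    apply (C2_sec2 (fun t u => f (s - lam * (t - u)) * sin (w * u)) t z). auto.
    apply (C2_sec2 (fun t u => g (s - lam * (t - u)) * sin (w * u)) t z). auto.
  - intros y _. rewrite <- Rmult_minus_distr_r, Rabs_mult.
    pose proof (HM (s - lam * (t - y))). pose proof (Rabs_pos (f (s - lam * (t - y)) - g (s - lam * (t - y)))).
    pose proof (SIN_bound (w * y)).
    assert (Rabs (sin (w * y)) <= 1) by (apply Rabs_le; lra).
    assert (0 <= M) by (pose proof (Rabs_pos (f s - g s)); pose proof (HM s); lra).
    nra.
Qed.

Lemma Phi_diff_bound lam w (f df g dg : R -> R) (t s M : R) :
  (forall s, is_derive f s (df s)) -> (forall s, is_derive g s (dg s)) ->
  (forall s, Rabs (f s - g s) <= M) ->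
  Rabs (Phi lam w f t s - Phi lam w g t s) <= Rabs t * M.
Proof.
  intros Hf Hg HM. unfold Phi.
  eapply Rle_trans. apply Psi_diff_bound; auto.
  - intro; apply (cf f df Hf).
  - intro; apply (cf g dg Hg).
  - apply Rmult_le_compat_r.
    + pose proof (Rabs_pos (f 0 - g 0)); pose proof (HM 0); lra.
    + unfold Rmax. destruct (Rle_dec t 0). rewrite Rabs_R0; apply Rabs_pos. right; reflexivity.
Qed.

End Mod_M.
Import Mod_M.

Module Mod_S.
Open Scope R_scope.
Open Scope R_scope.

Definition C1glob (f ft fx fy fz : R -> R -> R -> R -> R) : Prop :=
  forall t x y z,
     is_derive (fun s => f s x y z) t (ft t x y z) /\
     is_derive (fun s => f t s y z) x (fx t x y z) /\
     is_derive (fun s => f t x s z) y (fy t x y z) /\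
     is_derive (fun s => f t x y s) z (fz t x y z) /\
     cont4 f t x y z /\ cont4 ft t x y z /\ cont4 fx t x y z /\
     cont4 fy t x y z /\ cont4 fz t x y z.

Lemma cont4_t f t x y z : cont4 f t x y z -> continuous (fun s => f s x y z) t.
Proof.
  intro H.
  apply (continuous_comp (fun s : R => (s, x, y, z))
     (fun q : R * R * R * R => f (fst (fst (fst q))) (snd (fst (fst q))) (snd (fst q)) (snd q))).
  - apply cont_pair; [apply cont_pair; [apply cont_pair|]|].
    apply continuous_id. apply continuous_const. apply continuous_const. apply continuous_const.
  - exact H.
Qed.

Lemma C1glob_upto f ft fx fy fz t0 : C1glob f ft fx fy fz -> C1_upto t0 f ft fx fy fz.
Proof.
  intro H. split.
  - intros t x y z _. apply H.
  - intros x y z. apply (filterlim_filter_le_1 (F := locally t0)).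
    apply filter_le_within. apply cont4_t. apply H.
Qed.

Lemma C1_plus f ft fx fy fz g gt gx gy gz :
  C1glob f ft fx fy fz -> C1glob g gt gx gy gz ->
  C1glob (fun t x y z => f t x y z + g t x y z) (fun t x y z => ft t x y z + gt t x y z)
    (fun t x y z => fx t x y z + gx t x y z) (fun t x y z => fy t x y z + gy t x y z)
    (fun t x y z => fz t x y z + gz t x y z).
Proof.
  intros Hf Hg t x y z.
  destruct (Hf t x y z) as (a1&a2&a3&a4&a5&a6&a7&a8&a9).
  destruct (Hg t x y z) as (b1&b2&b3&b4&b5&b6&b7&b8&b9).
  split; [apply dR_plus; auto|]. split; [apply dR_plus; auto|].
  split; [apply dR_plus; auto|]. split; [apply dR_plus; auto|].
  split; [apply c4_plus; auto|]. split; [apply c4_plus; auto|].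
  split; [apply c4_plus; auto|]. split; [apply c4_plus; auto|].
  apply c4_plus; auto.
Qed.

Lemma C1_minus f ft fx fy fz g gt gx gy gz :
  C1glob f ft fx fy fz -> C1glob g gt gx gy gz ->
  C1glob (fun t x y z => f t x y z - g t x y z) (fun t x y z => ft t x y z - gt t x y z)
    (fun t x y z => fx t x y z - gx t x y z) (fun t x y z => fy t x y z - gy t x y z)
    (fun t x y z => fz t x y z - gz t x y z).
Proof.
  intros Hf Hg t x y z.
  destruct (Hf t x y z) as (a1&a2&a3&a4&a5&a6&a7&a8&a9).
  destruct (Hg t x y z) as (b1&b2&b3&b4&b5&b6&b7&b8&b9).
  split; [apply dR_minus; auto|]. split; [apply dR_minus; auto|].
  split; [apply dR_minus; auto|]. split; [apply dR_minus; auto|].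
  split; [apply c4_minus; auto|]. split; [apply c4_minus; auto|].
  split; [apply c4_minus; auto|]. split; [apply c4_minus; auto|].
  apply c4_minus; auto.
Qed.

Lemma C1_scal a f ft fx fy fz :
  C1glob f ft fx fy fz ->
  C1glob (fun t x y z => a * f t x y z) (fun t x y z => a * ft t x y z)
    (fun t x y z => a * fx t x y z) (fun t x y z => a * fy t x y z)
    (fun t x y z => a * fz t x y z).
Proof.
  intros Hf t x y z.
  destruct (Hf t x y z) as (a1&a2&a3&a4&a5&a6&a7&a8&a9).
  split; [apply dR_scal; auto|]. split; [apply dR_scal; auto|].
  split; [apply dR_scal; auto|]. split; [apply dR_scal; auto|].
  split; [apply c4_mult; auto; apply c4_const|]. split; [apply c4_mult; auto; apply c4_const|].
  split; [apply c4_mult; auto; apply c4_const|]. split; [apply c4_mult; auto; apply c4_const|].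
  apply c4_mult; auto; apply c4_const.
Qed.

Lemma C1_mode (F Ft Fs : R -> R -> R) (kk ll mm : R) :
  (forall t s, is_derive (fun u => F u s) t (Ft t s)) ->
  (forall t s, is_derive (fun u => F t u) s (Fs t s)) ->
  (forall t s, C2 F t s) -> (forall t s, C2 Ft t s) -> (forall t s, C2 Fs t s) ->
  C1glob (fun t x y z => F t (kk * x + ll * y + mm * z))
         (fun t x y z => Ft t (kk * x + ll * y + mm * z))
         (fun t x y z => kk * Fs t (kk * x + ll * y + mm * z))
         (fun t x y z => ll * Fs t (kk * x + ll * y + mm * z))
         (fun t x y z => mm * Fs t (kk * x + ll * y + mm * z)).
Proof.
  intros Dt Ds CF CFt CFs t x y z.
  assert (C : forall G, (forall t s, C2 G t s) -> cont4 (fun t x y z => G t (kk * x + ll * y + mm * z)) t x y z).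
  { intros G HG. unfold cont4.
    apply (continuous_comp (fun q : R * R * R * R =>
       (fst (fst (fst q)), kk * snd (fst (fst q)) + ll * snd (fst q) + mm * snd q))
       (fun q : R * R => G (fst q) (snd q))).
    - apply cont_pair.
      + apply (continuous_comp fst (fun q => fst (fst q))). apply cont_fst.
        apply (continuous_comp fst fst). apply cont_fst. apply cont_fst.
      + apply cont_Rplus; [apply cont_Rplus|]; apply cont_Rmult; try apply continuous_const.
        * apply (continuous_comp fst (fun q => snd (fst q))). apply cont_fst.
          apply (continuous_comp fst snd). apply cont_fst. apply cont_snd.
        * apply (continuous_comp fst snd). apply cont_fst. apply cont_snd.
        * apply cont_snd.
    - apply HG. }
  assert (Cs : forall a, cont4 (fun t x y z => a * Fs t (kk * x + ll * y + mm * z)) t x y z).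
  { intro a. apply c4_mult. apply c4_const. apply C. auto. }
  split; [apply Dt|].
  split.
  { eapply dR_val. apply (is_derive_comp (fun u => F t u) (fun s => kk * s + ll * y + mm * z)).
    apply Ds. apply dR_plus. apply dR_plus. apply dR_scal. apply (is_derive_id (K := R_AbsRing)).
    apply dR_const. apply dR_const. simpl. change one with 1. unfold scal; simpl; unfold mult; simpl. ring. }
  split.
  { eapply dR_val. apply (is_derive_comp (fun u => F t u) (fun s => kk * x + ll * s + mm * z)).
    apply Ds. apply dR_plus. apply dR_plus. apply dR_const. apply dR_scal. apply (is_derive_id (K := R_AbsRing)).
    apply dR_const. simpl. change one with 1. unfold scal; simpl; unfold mult; simpl. ring. }
  split.
  { eapply dR_val. apply (is_derive_comp (fun u => F t u) (fun s => kk * x + ll * y + mm * s)).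
    apply Ds. apply dR_plus. apply dR_const. apply dR_scal. apply (is_derive_id (K := R_AbsRing)).
    simpl. change one with 1. unfold scal; simpl; unfold mult; simpl. ring. }
  split; [apply C; auto|]. split; [apply C; auto|].
  split; [apply Cs|]. split; [apply Cs|]. apply Cs.
Qed.

Lemma rr_sq k l m i : rr k l m i * rr k l m i = k i * k i + l i * l i + m i * m i.
Proof. unfold rr. rewrite sqrt_sqrt. ring. nra. Qed.

Section Sol.
Variables U0 c0 rho0 wf : R.
Variables k l m : nat -> R.
Variables f1 f2 f3 f4 df1 df2 df3 df4 : R -> R.
Hypothesis D1 : forall s, is_derive f1 s (df1 s).
Hypothesis D2 : forall s, is_derive f2 s (df2 s).
Hypothesis D3 : forall s, is_derive f3 s (df3 s).
Hypothesis D4 : forall s, is_derive f4 s (df4 s).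
Hypothesis E1 : forall s, continuous df1 s.
Hypothesis E2 : forall s, continuous df2 s.
Hypothesis E3 : forall s, continuous df3 s.
Hypothesis E4 : forall s, continuous df4 s.

Definition lam1 := U0 * k 1%nat - c0 * rr k l m 1.
Definition lam2 := U0 * k 2%nat + c0 * rr k l m 2.
Definition lam3 := U0 * k 3%nat.
Definition lam4 := U0 * k 4%nat.

Definition xi i x y z := k i * x + l i * y + m i * z.

Definition M1 t x y z := Phi lam1 wf f1 t (k 1%nat * x + l 1%nat * y + m 1%nat * z).
Definition M2 t x y z := Phi lam2 wf f2 t (k 2%nat * x + l 2%nat * y + m 2%nat * z).
Definition M3 t x y z := Phi lam3 wf f3 t (k 3%nat * x + l 3%nat * y + m 3%nat * z).
Definition M4 t x y z := Phi lam4 wf f4 t (k 4%nat * x + l 4%nat * y + m 4%nat * z).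

Definition sol : field := mkField
  (fun t x y z => k 1%nat * M1 t x y z + k 2%nat * M2 t x y z + l 3%nat / k 3%nat * M3 t x y z
                  + m 4%nat / k 4%nat * M4 t x y z)
  (fun t x y z => l 1%nat * M1 t x y z + l 2%nat * M2 t x y z - M3 t x y z)
  (fun t x y z => m 1%nat * M1 t x y z + m 2%nat * M2 t x y z - M4 t x y z)
  (fun t x y z => - c0 * rho0 * rr k l m 1 * M1 t x y z + c0 * rho0 * rr k l m 2 * M2 t x y z).

Lemma C1M (lam : R) f df kk ll mm :
  (forall s, is_derive f s (df s)) -> (forall s, continuous df s) ->
  C1glob (fun t x y z => Phi lam wf f t (kk * x + ll * y + mm * z))
         (fun t x y z => Phit lam wf f df t (kk * x + ll * y + mm * z))
         (fun t x y z => kk * Phis lam wf df t (kk * x + ll * y + mm * z))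
         (fun t x y z => ll * Phis lam wf df t (kk * x + ll * y + mm * z))
         (fun t x y z => mm * Phis lam wf df t (kk * x + ll * y + mm * z)).
Proof.
  intros Hd Hc. apply C1_mode.
  - intros; apply dPhi_t; auto.
  - intros; apply dPhi_s; auto.
  - intros; apply (cPhi lam wf f df); auto.
  - intros; apply cPhit; auto.
  - intros; apply cPhis; auto.
Qed.


Lemma sol_IsSol (A : amp) t0 :
  0 < rho0 -> k 3%nat <> 0 -> k 4%nat <> 0 ->
  (forall x y z, aF A x y z = k 1%nat * f1 (xi 1 x y z) + k 2%nat * f2 (xi 2 x y z)
                     + l 3%nat / k 3%nat * f3 (xi 3 x y z) + m 4%nat / k 4%nat * f4 (xi 4 x y z)) ->
  (forall x y z, aG A x y z = l 1%nat * f1 (xi 1 x y z) + l 2%nat * f2 (xi 2 x y z) - f3 (xi 3 x y z)) ->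
  (forall x y z, aH A x y z = m 1%nat * f1 (xi 1 x y z) + m 2%nat * f2 (xi 2 x y z) - f4 (xi 4 x y z)) ->
  (forall x y z, aP A x y z = - c0 * rho0 * rr k l m 1 * f1 (xi 1 x y z)
                     + c0 * rho0 * rr k l m 2 * f2 (xi 2 x y z)) ->
  IsSol U0 c0 rho0 wf A t0 sol.
Proof.
  intros Hr Hk3 Hk4 HF HG HH HP.
  pose proof (C1M lam1 f1 df1 (k 1%nat) (l 1%nat) (m 1%nat) D1 E1) as G1.
  pose proof (C1M lam2 f2 df2 (k 2%nat) (l 2%nat) (m 2%nat) D2 E2) as G2.
  pose proof (C1M lam3 f3 df3 (k 3%nat) (l 3%nat) (m 3%nat) D3 E3) as G3.
  pose proof (C1M lam4 f4 df4 (k 4%nat) (l 4%nat) (m 4%nat) D4 E4) as G4.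
  pose proof (C1_plus _ _ _ _ _ _ _ _ _ _ (C1_plus _ _ _ _ _ _ _ _ _ _ (C1_plus _ _ _ _ _ _ _ _ _ _
     (C1_scal (k 1%nat) _ _ _ _ _ G1) (C1_scal (k 2%nat) _ _ _ _ _ G2))
     (C1_scal (l 3%nat / k 3%nat) _ _ _ _ _ G3)) (C1_scal (m 4%nat / k 4%nat) _ _ _ _ _ G4)) as CF.
  pose proof (C1_minus _ _ _ _ _ _ _ _ _ _ (C1_plus _ _ _ _ _ _ _ _ _ _
     (C1_scal (l 1%nat) _ _ _ _ _ G1) (C1_scal (l 2%nat) _ _ _ _ _ G2)) G3) as CG.
  pose proof (C1_minus _ _ _ _ _ _ _ _ _ _ (C1_plus _ _ _ _ _ _ _ _ _ _
     (C1_scal (m 1%nat) _ _ _ _ _ G1) (C1_scal (m 2%nat) _ _ _ _ _ G2)) G4) as CH.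
  pose proof (C1_plus _ _ _ _ _ _ _ _ _ _
     (C1_scal (- c0 * rho0 * rr k l m 1) _ _ _ _ _ G1) (C1_scal (c0 * rho0 * rr k l m 2) _ _ _ _ _ G2)) as CP.
  split.
  - intros t x y z Ht. unfold sol, M1, M2, M3, M4; simpl. rewrite !Phi_neg by auto. repeat split; ring.
  - do 16 eexists.
    split; [exact (C1glob_upto _ _ _ _ _ t0 CF)|].
    split; [exact (C1glob_upto _ _ _ _ _ t0 CG)|].
    split; [exact (C1glob_upto _ _ _ _ _ t0 CH)|].
    split; [exact (C1glob_upto _ _ _ _ _ t0 CP)|].
    intros t x y z _. cbv beta.
    rewrite HF, HG, HH, HP. unfold xi.
    set (s1 := k 1%nat * x + l 1%nat * y + m 1%nat * z).
    set (s2 := k 2%nat * x + l 2%nat * y + m 2%nat * z).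
    set (s3 := k 3%nat * x + l 3%nat * y + m 3%nat * z).
    set (s4 := k 4%nat * x + l 4%nat * y + m 4%nat * z).
    pose proof (Phi_pde lam1 wf f1 df1 t s1) as P1.
    pose proof (Phi_pde lam2 wf f2 df2 t s2) as P2.
    pose proof (Phi_pde lam3 wf f3 df3 t s3) as P3.
    pose proof (Phi_pde lam4 wf f4 df4 t s4) as P4.
    replace (Phit lam1 wf f1 df1 t s1) with (heaviside t * sin (wf * t) * f1 s1 - lam1 * Phis lam1 wf df1 t s1) by lra.
    replace (Phit lam2 wf f2 df2 t s2) with (heaviside t * sin (wf * t) * f2 s2 - lam2 * Phis lam2 wf df2 t s2) by lra.
    replace (Phit lam3 wf f3 df3 t s3) with (heaviside t * sin (wf * t) * f3 s3 - lam3 * Phis lam3 wf df3 t s3) by lra.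
    replace (Phit lam4 wf f4 df4 t s4) with (heaviside t * sin (wf * t) * f4 s4 - lam4 * Phis lam4 wf df4 t s4) by lra.
    unfold lam1, lam2, lam3, lam4.
    split; [field; lra|]. split; [field; lra|]. split; [field; lra|].
    match goal with |- ?L = ?R =>
      assert (HH0 : L - R = rho0 * c0 ^ 2 * ((k 1%nat * k 1%nat + l 1%nat * l 1%nat + m 1%nat * m 1%nat)
                              - rr k l m 1 * rr k l m 1) * Phis lam1 wf df1 t s1
                         + rho0 * c0 ^ 2 * ((k 2%nat * k 2%nat + l 2%nat * l 2%nat + m 2%nat * m 2%nat)
                              - rr k l m 2 * rr k l m 2) * Phis lam2 wf df2 t s2)
        by (unfold lam1, lam2; field; lra) end.
    rewrite !rr_sq in HH0. lra.
Qed.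

End Sol.

End Mod_S.
Import Mod_S.

Module Mod_Z.
Open Scope R_scope.
Open Scope R_scope.

Section Stab.
Variables c0 rho0 : R.
Variables k l m : nat -> R.
Hypothesis Hc : 0 < c0.
Hypothesis Hr : 0 < rho0.
Hypothesis Hk : k 1%nat * k 2%nat * k 3%nat * k 4%nat <> 0.
Hypothesis HD : DeltaZ2 c0 rho0 k l m <> 0.

Definition al1 := k 1%nat * k 3%nat * k 4%nat + k 4%nat * l 1%nat * l 3%nat + k 3%nat * m 1%nat * m 4%nat.
Definition al2 := k 2%nat * k 3%nat * k 4%nat + k 4%nat * l 2%nat * l 3%nat + k 3%nat * m 2%nat * m 4%nat.
Definition Dz := al1 * rr k l m 2 + al2 * rr k l m 1.

Lemma kne : k 1%nat <> 0 /\ k 2%nat <> 0 /\ k 3%nat <> 0 /\ k 4%nat <> 0.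
Proof.
  repeat split; intro H; apply Hk; rewrite H; ring.
Qed.

Lemma Dz_ne : Dz <> 0.
Proof.
  intro H. apply HD. unfold DeltaZ2. unfold Dz, al1, al2 in H.
  replace (rr k l m 1 * (k 2%nat * k 3%nat * k 4%nat + k 3%nat * m 2%nat * m 4%nat + k 4%nat * l 2%nat * l 3%nat) +
    rr k l m 2 * (k 1%nat * k 3%nat * k 4%nat + k 3%nat * m 1%nat * m 4%nat + k 4%nat * l 1%nat * l 3%nat))
  with ((k 1%nat * k 3%nat * k 4%nat + k 4%nat * l 1%nat * l 3%nat + k 3%nat * m 1%nat * m 4%nat) * rr k l m 2 +
    (k 2%nat * k 3%nat * k 4%nat + k 4%nat * l 2%nat * l 3%nat + k 3%nat * m 2%nat * m 4%nat) * rr k l m 1) by ring.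
  rewrite H. ring.
Qed.

Definition cc := c0 * rho0.
Definition Kq := Rabs (k 3%nat * k 4%nat) + Rabs (k 4%nat * l 3%nat) + Rabs (k 3%nat * m 4%nat).
Definition K1 := (Rabs (rr k l m 2) * Kq + Rabs al2 / cc) / Rabs Dz.
Definition K2 := (Rabs (rr k l m 1) * Kq + Rabs al1 / cc) / Rabs Dz.
Definition K3 := Rabs (l 1%nat) * K1 + Rabs (l 2%nat) * K2 + 1.
Definition K4 := Rabs (m 1%nat) * K1 + Rabs (m 2%nat) * K2 + 1.
Definition Kst := K1 + K2 + K3 + K4.

Lemma K_nonneg : 0 <= K1 /\ 0 <= K2 /\ 0 <= K3 /\ 0 <= K4.
Proof.
  assert (0 < cc) by (unfold cc; nra).
  assert (0 < Rabs Dz) by (apply Rabs_pos_lt; apply Dz_ne).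
  assert (0 <= Kq) by (unfold Kq; pose proof (Rabs_pos (k 3%nat * k 4%nat)); pose proof (Rabs_pos (k 4%nat * l 3%nat)); pose proof (Rabs_pos (k 3%nat * m 4%nat)); lra).
  assert (0 <= K1).
  { unfold K1. apply Rmult_le_pos; [|left; apply Rinv_0_lt_compat; auto].
    apply Rplus_le_le_0_compat. apply Rmult_le_pos; auto; apply Rabs_pos.
    apply Rmult_le_pos; [apply Rabs_pos| left; apply Rinv_0_lt_compat; auto]. }
  assert (0 <= K2).
  { unfold K2. apply Rmult_le_pos; [|left; apply Rinv_0_lt_compat; auto].
    apply Rplus_le_le_0_compat. apply Rmult_le_pos; auto; apply Rabs_pos.
    apply Rmult_le_pos; [apply Rabs_pos| left; apply Rinv_0_lt_compat; auto]. }
  unfold K3, K4. pose proof (Rabs_pos (l 1%nat)). pose proof (Rabs_pos (l 2%nat)).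
  pose proof (Rabs_pos (m 1%nat)). pose proof (Rabs_pos (m 2%nat)).
  repeat split; auto; nra.
Qed.

Lemma abs_le_sum3 a b c Ma Mb Mc M : Rabs a <= Ma * M -> Rabs b <= Mb * M -> Rabs c <= Mc * M ->
  Rabs (a + b + c) <= (Ma + Mb + Mc) * M.
Proof.
  intros. eapply Rle_trans. apply Rabs_triang. eapply Rle_trans. apply Rplus_le_compat_r. apply Rabs_triang. nra.
Qed.

Lemma lin_bound p q a b w A B M : Rabs a <= A * M -> Rabs b <= B * M -> Rabs w <= M ->
  Rabs (p * a + q * b - w) <= (Rabs p * A + Rabs q * B + 1) * M.
Proof.
  intros Ha Hb Hw. unfold Rminus. eapply Rle_trans. apply Rabs_triang. rewrite Rabs_Ropp.
  eapply Rle_trans. apply Rplus_le_compat_r. apply Rabs_triang. rewrite !Rabs_mult.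
  pose proof (Rabs_pos p). pose proof (Rabs_pos q).
  assert (Rabs p * Rabs a <= Rabs p * (A * M)) by (apply Rmult_le_compat_l; auto).
  assert (Rabs q * Rabs b <= Rabs q * (B * M)) by (apply Rmult_le_compat_l; auto).
  nra.
Qed.

Lemma stab (B : amp) (g1 g2 g3 g4 : R -> R) (M : R) :
  (forall x y z, aF B x y z = k 1%nat * g1 (xi k l m 1 x y z) + k 2%nat * g2 (xi k l m 2 x y z)
                     + l 3%nat / k 3%nat * g3 (xi k l m 3 x y z) + m 4%nat / k 4%nat * g4 (xi k l m 4 x y z)) ->
  (forall x y z, aG B x y z = l 1%nat * g1 (xi k l m 1 x y z) + l 2%nat * g2 (xi k l m 2 x y z) - g3 (xi k l m 3 x y z)) ->
  (forall x y z, aH B x y z = m 1%nat * g1 (xi k l m 1 x y z) + m 2%nat * g2 (xi k l m 2 x y z) - g4 (xi k l m 4 x y z)) ->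
  (forall x y z, aP B x y z = - c0 * rho0 * rr k l m 1 * g1 (xi k l m 1 x y z)
                     + c0 * rho0 * rr k l m 2 * g2 (xi k l m 2 x y z)) ->
  (forall x y z, Rabs (aF B x y z) <= M /\ Rabs (aG B x y z) <= M /\ Rabs (aH B x y z) <= M /\ Rabs (aP B x y z) <= M) ->
  forall s, Rabs (g1 s) <= K1 * M /\ Rabs (g2 s) <= K2 * M /\ Rabs (g3 s) <= K3 * M /\ Rabs (g4 s) <= K4 * M.
Proof.
  intros HF HG HH HP HM.
  destruct kne as (k1n & k2n & k3n & k4n).
  assert (Hcc : 0 < cc) by (unfold cc; nra).
  assert (HDz : 0 < Rabs Dz) by (apply Rabs_pos_lt; apply Dz_ne).
  assert (M0 : 0 <= M) by (destruct (HM 0 0 0) as (A1&_); pose proof (Rabs_pos (aF B 0 0 0)); lra).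
  assert (Q : forall x y z, Rabs (k 3%nat * k 4%nat * aF B x y z + k 4%nat * l 3%nat * aG B x y z
                                  + k 3%nat * m 4%nat * aH B x y z) <= Kq * M).
  { intros x y z. destruct (HM x y z) as (A1&A2&A3&A4). unfold Kq.
    apply abs_le_sum3; rewrite Rabs_mult; apply Rmult_le_compat_l; auto; apply Rabs_pos. }
  assert (Id : forall x y z,
     Dz * g1 (xi k l m 1 x y z) = rr k l m 2 * (k 3%nat * k 4%nat * aF B x y z + k 4%nat * l 3%nat * aG B x y z
                                  + k 3%nat * m 4%nat * aH B x y z) - al2 / cc * aP B x y z /\
     Dz * g2 (xi k l m 2 x y z) = rr k l m 1 * (k 3%nat * k 4%nat * aF B x y z + k 4%nat * l 3%nat * aG B x y z
                                  + k 3%nat * m 4%nat * aH B x y z) + al1 / cc * aP B x y z).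
  { intros x y z. rewrite HF, HG, HH, HP. unfold Dz, al1, al2, cc. split; field; lra. }
  assert (B1 : forall s, Rabs (g1 s) <= K1 * M).
  { intro s. destruct (Id (s / k 1%nat) 0 0) as [I1 _].
    replace (xi k l m 1 (s / k 1%nat) 0 0) with s in I1 by (unfold xi; field; auto).
    destruct (HM (s / k 1%nat) 0 0) as (_&_&_&A4).
    pose proof (Q (s / k 1%nat) 0 0) as Q1.
    apply Rmult_le_reg_l with (Rabs Dz); auto. rewrite <- Rabs_mult, I1.
    unfold K1. replace (Rabs Dz * ((Rabs (rr k l m 2) * Kq + Rabs al2 / cc) / Rabs Dz * M))
      with (Rabs (rr k l m 2) * (Kq * M) + Rabs (al2 / cc) * M)
      by (rewrite Rabs_div, (Rabs_right cc) by lra; field; split; lra).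
    eapply Rle_trans. apply Rabs_triang. rewrite Rabs_Ropp, !Rabs_mult.
    apply Rplus_le_compat. apply Rmult_le_compat_l; auto; apply Rabs_pos.
    apply Rmult_le_compat_l; auto; apply Rabs_pos. }
  assert (B2 : forall s, Rabs (g2 s) <= K2 * M).
  { intro s. destruct (Id (s / k 2%nat) 0 0) as [_ I2].
    replace (xi k l m 2 (s / k 2%nat) 0 0) with s in I2 by (unfold xi; field; auto).
    destruct (HM (s / k 2%nat) 0 0) as (_&_&_&A4).
    pose proof (Q (s / k 2%nat) 0 0) as Q1.
    apply Rmult_le_reg_l with (Rabs Dz); auto. rewrite <- Rabs_mult, I2.
    unfold K2. replace (Rabs Dz * ((Rabs (rr k l m 1) * Kq + Rabs al1 / cc) / Rabs Dz * M))
      with (Rabs (rr k l m 1) * (Kq * M) + Rabs (al1 / cc) * M)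
      by (rewrite Rabs_div, (Rabs_right cc) by lra; field; split; lra).
    eapply Rle_trans. apply Rabs_triang. rewrite !Rabs_mult.
    apply Rplus_le_compat. apply Rmult_le_compat_l; auto; apply Rabs_pos.
    apply Rmult_le_compat_l; auto; apply Rabs_pos. }
  intro s. refine (conj (B1 s) (conj (B2 s) (conj _ _))).
  - destruct (HM (s / k 3%nat) 0 0) as (_&A2&_&_). rewrite HG in A2.
    replace (xi k l m 3 (s / k 3%nat) 0 0) with s in A2 by (unfold xi; field; auto).
    set (a := g1 (xi k l m 1 (s / k 3%nat) 0 0)) in *. set (b := g2 (xi k l m 2 (s / k 3%nat) 0 0)) in *.
    replace (g3 s) with (l 1%nat * a + l 2%nat * b - (l 1%nat * a + l 2%nat * b - g3 s)) by ring.
    unfold K3. apply lin_bound; [apply B1|apply B2|auto].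
  - destruct (HM (s / k 4%nat) 0 0) as (_&_&A3&_). rewrite HH in A3.
    replace (xi k l m 4 (s / k 4%nat) 0 0) with s in A3 by (unfold xi; field; auto).
    set (a0 := g1 (xi k l m 1 (s / k 4%nat) 0 0)) in *. set (b0 := g2 (xi k l m 2 (s / k 4%nat) 0 0)) in *.
    replace (g4 s) with (m 1%nat * a0 + m 2%nat * b0 - (m 1%nat * a0 + m 2%nat * b0 - g4 s)) by ring.
    unfold K4. apply lin_bound; [apply B1|apply B2|auto].
Qed.
End Stab.

Lemma Z2norm_lt B eps : Rbar_lt (Z2norm B) (Finite eps) ->
  forall x y z, Rabs (aF B x y z) < eps /\ Rabs (aG B x y z) < eps /\
                Rabs (aH B x y z) < eps /\ Rabs (aP B x y z) < eps.
Proof.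
  intros H x y z. unfold Z2norm in H.
  destruct (Lub_Rbar_correct (fun r => exists x y z,
     r = Rabs (aF B x y z) \/ r = Rabs (aG B x y z) \/
     r = Rabs (aH B x y z) \/ r = Rabs (aP B x y z))) as [Hub _].
  assert (G : forall r, (r = Rabs (aF B x y z) \/ r = Rabs (aG B x y z) \/
     r = Rabs (aH B x y z) \/ r = Rabs (aP B x y z)) -> r < eps).
  { intros r Hr. assert (Hle := Hub r (ex_intro _ x (ex_intro _ y (ex_intro _ z Hr)))).
    pose proof (Rbar_le_lt_trans _ _ _ Hle H). exact H0. }
  repeat split; apply G; auto.
Qed.

Lemma Z2norm_le B M : (forall x y z, Rabs (aF B x y z) <= M /\ Rabs (aG B x y z) <= M /\
                Rabs (aH B x y z) <= M /\ Rabs (aP B x y z) <= M) ->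
  Rbar_le (Z2norm B) (Finite M).
Proof.
  intros H. unfold Z2norm.
  destruct (Lub_Rbar_correct (fun r => exists x y z,
     r = Rabs (aF B x y z) \/ r = Rabs (aG B x y z) \/
     r = Rabs (aH B x y z) \/ r = Rabs (aP B x y z))) as [_ Hlub].
  apply Hlub. intros r [x [y [z Hr]]]. simpl. destruct (H x y z) as (A1&A2&A3&A4).
  destruct Hr as [->|[->|[->| ->]]]; auto.
Qed.

Lemma Z2norm_ge B x y z : forall r, (r = Rabs (aF B x y z) \/ r = Rabs (aG B x y z) \/
     r = Rabs (aH B x y z) \/ r = Rabs (aP B x y z)) -> Rbar_le (Finite r) (Z2norm B).
Proof.
  intros r Hr. unfold Z2norm.
  destruct (Lub_Rbar_correct (fun r => exists x y z,
     r = Rabs (aF B x y z) \/ r = Rabs (aG B x y z) \/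
     r = Rabs (aH B x y z) \/ r = Rabs (aP B x y z))) as [Hub _].
  apply Hub. exists x, y, z. auto.
Qed.

Lemma bounded3_of f M : (forall x y z, Rabs (f x y z) <= M) -> bounded3 f.
Proof. intros H. exists M. auto. Qed.

End Mod_Z.
Import Mod_Z.

Module Mod_W.
Open Scope R_scope.
Open Scope R_scope.

Definition Rep (c0 rho0 : R) (k l m : nat -> R) (A : amp) (f1 f2 f3 f4 : R -> R) : Prop :=
  (forall x y z, aF A x y z = k 1%nat * f1 (xi k l m 1 x y z) + k 2%nat * f2 (xi k l m 2 x y z)
                     + l 3%nat / k 3%nat * f3 (xi k l m 3 x y z) + m 4%nat / k 4%nat * f4 (xi k l m 4 x y z)) /\
  (forall x y z, aG A x y z = l 1%nat * f1 (xi k l m 1 x y z) + l 2%nat * f2 (xi k l m 2 x y z) - f3 (xi k l m 3 x y z)) /\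
  (forall x y z, aH A x y z = m 1%nat * f1 (xi k l m 1 x y z) + m 2%nat * f2 (xi k l m 2 x y z) - f4 (xi k l m 4 x y z)) /\
  (forall x y z, aP A x y z = - c0 * rho0 * rr k l m 1 * f1 (xi k l m 1 x y z)
                     + c0 * rho0 * rr k l m 2 * f2 (xi k l m 2 x y z)).

Lemma inZ2_rep c0 rho0 k l m A : inZ2 c0 rho0 k l m A ->
  exists f1 f2 f3 f4 df1 df2 df3 df4,
    (forall s, is_derive f1 s (df1 s)) /\ (forall s, is_derive f2 s (df2 s)) /\
    (forall s, is_derive f3 s (df3 s)) /\ (forall s, is_derive f4 s (df4 s)) /\
    (forall s, continuous df1 s) /\ (forall s, continuous df2 s) /\
    (forall s, continuous df3 s) /\ (forall s, continuous df4 s) /\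
    Rep c0 rho0 k l m A f1 f2 f3 f4 /\
    exists M, forall x y z, Rabs (aF A x y z) <= M /\ Rabs (aG A x y z) <= M /\
                Rabs (aH A x y z) <= M /\ Rabs (aP A x y z) <= M.
Proof.
  intros [[f1 [f2 [f3 [f4 [[d1 [D1 E1]] [[d2 [D2 E2]] [[d3 [D3 E3]] [[d4 [D4 E4]] H]]]]]]]]
          [[M1 B1] [[M2 B2] [[M3 B3] [M4 B4]]]]].
  cbv zeta in H. destruct H as (HF & HG & HH & HP).
  exists f1, f2, f3, f4, d1, d2, d3, d4.
  repeat (split; [assumption|]). split.
  - split; [exact HF|]. split; [exact HG|]. split; [exact HH|exact HP].
  - exists (Rmax (Rmax M1 M2) (Rmax M3 M4)). intros x y z.
    pose proof (B1 x y z). pose proof (B2 x y z). pose proof (B3 x y z). pose proof (B4 x y z).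
    pose proof (Rmax_l M1 M2). pose proof (Rmax_r M1 M2). pose proof (Rmax_l M3 M4). pose proof (Rmax_r M3 M4).
    pose proof (Rmax_l (Rmax M1 M2) (Rmax M3 M4)). pose proof (Rmax_r (Rmax M1 M2) (Rmax M3 M4)).
    repeat split; lra.
Qed.

Lemma Phi_zero lam w t s : Phi lam w (fun _ => 0) t s = 0.
Proof. unfold Phi, Psi. apply RInt_zero. intro; ring. Qed.

Lemma Phi_bound lam w f df t s Mf :
  (forall s, is_derive f s (df s)) -> (forall s, Rabs (f s) <= Mf) ->
  Rabs (Phi lam w f t s) <= Rabs t * Mf.
Proof.
  intros Hd Hb.
  pose proof (Phi_diff_bound lam w f df (fun _ => 0) (fun _ => 0) t s Mf Hd (fun s => dR_const 0 s)) as H.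
  rewrite Phi_zero, Rminus_0_r in H. apply H. intro s'. rewrite Rminus_0_r. auto.
Qed.

Lemma sum4_bound a1 a2 a3 a4 d1 d2 d3 d4 D :
  Rabs d1 <= D -> Rabs d2 <= D -> Rabs d3 <= D -> Rabs d4 <= D ->
  Rabs (a1 * d1 + a2 * d2 + a3 * d3 + a4 * d4) <= (Rabs a1 + Rabs a2 + Rabs a3 + Rabs a4) * D.
Proof.
  intros H1 H2 H3 H4.
  pose proof (Rabs_pos a1). pose proof (Rabs_pos a2). pose proof (Rabs_pos a3). pose proof (Rabs_pos a4).
  assert (Rabs a1 * Rabs d1 <= Rabs a1 * D) by (apply Rmult_le_compat_l; auto).
  assert (Rabs a2 * Rabs d2 <= Rabs a2 * D) by (apply Rmult_le_compat_l; auto).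
  assert (Rabs a3 * Rabs d3 <= Rabs a3 * D) by (apply Rmult_le_compat_l; auto).
  assert (Rabs a4 * Rabs d4 <= Rabs a4 * D) by (apply Rmult_le_compat_l; auto).
  eapply Rle_trans. apply Rabs_triang. eapply Rle_trans. apply Rplus_le_compat_r. apply Rabs_triang.
  eapply Rle_trans. apply Rplus_le_compat_r. apply Rplus_le_compat_r. apply Rabs_triang.
  rewrite !Rabs_mult. lra.
Qed.

Definition Cc (c0 rho0 : R) (k l m : nat -> R) :=
  (Rabs (k 1%nat) + Rabs (k 2%nat) + Rabs (l 3%nat / k 3%nat) + Rabs (m 4%nat / k 4%nat))
  + (Rabs (l 1%nat) + Rabs (l 2%nat) + Rabs (-1) + Rabs 0)
  + (Rabs (m 1%nat) + Rabs (m 2%nat) + Rabs 0 + Rabs (-1))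
  + (Rabs (- c0 * rho0 * rr k l m 1) + Rabs (c0 * rho0 * rr k l m 2) + Rabs 0 + Rabs 0).

Lemma Cc_ge c0 rho0 k l m :
  (Rabs (k 1%nat) + Rabs (k 2%nat) + Rabs (l 3%nat / k 3%nat) + Rabs (m 4%nat / k 4%nat)) <= Cc c0 rho0 k l m /\
  (Rabs (l 1%nat) + Rabs (l 2%nat) + Rabs (-1) + Rabs 0) <= Cc c0 rho0 k l m /\
  (Rabs (m 1%nat) + Rabs (m 2%nat) + Rabs 0 + Rabs (-1)) <= Cc c0 rho0 k l m /\
  (Rabs (- c0 * rho0 * rr k l m 1) + Rabs (c0 * rho0 * rr k l m 2) + Rabs 0 + Rabs 0) <= Cc c0 rho0 k l m.
Proof.
  unfold Cc.
  pose proof (Rabs_pos (k 1%nat)). pose proof (Rabs_pos (k 2%nat)). pose proof (Rabs_pos (l 3%nat / k 3%nat)).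
  pose proof (Rabs_pos (m 4%nat / k 4%nat)). pose proof (Rabs_pos (l 1%nat)). pose proof (Rabs_pos (l 2%nat)).
  pose proof (Rabs_pos (-1)). pose proof (Rabs_pos 0). pose proof (Rabs_pos (m 1%nat)). pose proof (Rabs_pos (m 2%nat)).
  pose proof (Rabs_pos (- c0 * rho0 * rr k l m 1)). pose proof (Rabs_pos (c0 * rho0 * rr k l m 2)).
  repeat split; lra.
Qed.

Lemma sol_diff_bound U0 c0 rho0 wf k l m f1 f2 f3 f4 df1 df2 df3 df4 g1 g2 g3 g4 dg1 dg2 dg3 dg4 t D :
  (forall s, is_derive f1 s (df1 s)) -> (forall s, is_derive f2 s (df2 s)) ->
  (forall s, is_derive f3 s (df3 s)) -> (forall s, is_derive f4 s (df4 s)) ->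
  (forall s, is_derive g1 s (dg1 s)) -> (forall s, is_derive g2 s (dg2 s)) ->
  (forall s, is_derive g3 s (dg3 s)) -> (forall s, is_derive g4 s (dg4 s)) ->
  (forall s, Rabs (f1 s - g1 s) <= D /\ Rabs (f2 s - g2 s) <= D /\ Rabs (f3 s - g3 s) <= D /\ Rabs (f4 s - g4 s) <= D) ->
  forall x y z,
  let v := sol U0 c0 rho0 wf k l m f1 f2 f3 f4 in
  let w := sol U0 c0 rho0 wf k l m g1 g2 g3 g4 in
  Rabs (vx v t x y z - vx w t x y z) <= Cc c0 rho0 k l m * (Rabs t * D) /\
  Rabs (vy v t x y z - vy w t x y z) <= Cc c0 rho0 k l m * (Rabs t * D) /\
  Rabs (vz v t x y z - vz w t x y z) <= Cc c0 rho0 k l m * (Rabs t * D) /\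
  Rabs (pp v t x y z - pp w t x y z) <= Cc c0 rho0 k l m * (Rabs t * D).
Proof.
  intros Df1 Df2 Df3 Df4 Dg1 Dg2 Dg3 Dg4 HD x y z v w.
  assert (HD0 : 0 <= D) by (destruct (HD 0) as [H _]; pose proof (Rabs_pos (f1 0 - g1 0)); lra).
  assert (Hb : forall lam f df g dg s, (forall s, is_derive f s (df s)) -> (forall s, is_derive g s (dg s)) ->
     (forall s, Rabs (f s - g s) <= D) -> Rabs (Phi lam wf f t s - Phi lam wf g t s) <= Rabs t * D).
  { intros. eapply Phi_diff_bound; eauto. }
  set (d1 := Phi (lam1 U0 c0 k l m) wf f1 t (k 1%nat * x + l 1%nat * y + m 1%nat * z)
           - Phi (lam1 U0 c0 k l m) wf g1 t (k 1%nat * x + l 1%nat * y + m 1%nat * z)).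
  set (d2 := Phi (lam2 U0 c0 k l m) wf f2 t (k 2%nat * x + l 2%nat * y + m 2%nat * z)
           - Phi (lam2 U0 c0 k l m) wf g2 t (k 2%nat * x + l 2%nat * y + m 2%nat * z)).
  set (d3 := Phi (lam3 U0 k) wf f3 t (k 3%nat * x + l 3%nat * y + m 3%nat * z)
           - Phi (lam3 U0 k) wf g3 t (k 3%nat * x + l 3%nat * y + m 3%nat * z)).
  set (d4 := Phi (lam4 U0 k) wf f4 t (k 4%nat * x + l 4%nat * y + m 4%nat * z)
           - Phi (lam4 U0 k) wf g4 t (k 4%nat * x + l 4%nat * y + m 4%nat * z)).
  assert (B1 : Rabs d1 <= Rabs t * D) by (apply (Hb _ f1 df1 g1 dg1); auto; intro; apply HD).
  assert (B2 : Rabs d2 <= Rabs t * D) by (apply (Hb _ f2 df2 g2 dg2); auto; intro; apply HD).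
  assert (B3 : Rabs d3 <= Rabs t * D) by (apply (Hb _ f3 df3 g3 dg3); auto; intro; apply HD).
  assert (B4 : Rabs d4 <= Rabs t * D) by (apply (Hb _ f4 df4 g4 dg4); auto; intro; apply HD).
  destruct (Cc_ge c0 rho0 k l m) as (C1 & C2 & C3 & C4).
  assert (Htd : 0 <= Rabs t * D) by (apply Rmult_le_pos; auto; apply Rabs_pos).
  unfold v, w, sol, M1, M2, M3, M4; simpl.
  split; [|split; [|split]].
  - replace (_ - _) with (k 1%nat * d1 + k 2%nat * d2 + l 3%nat / k 3%nat * d3 + m 4%nat / k 4%nat * d4)
      by (unfold d1, d2, d3, d4; ring).
    eapply Rle_trans. apply sum4_bound; eauto. apply Rmult_le_compat_r; auto.
  - replace (_ - _) with (l 1%nat * d1 + l 2%nat * d2 + (-1) * d3 + 0 * d4)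
      by (unfold d1, d2, d3, d4; ring).
    eapply Rle_trans. apply sum4_bound; eauto. apply Rmult_le_compat_r; auto.
  - replace (_ - _) with (m 1%nat * d1 + m 2%nat * d2 + 0 * d3 + (-1) * d4)
      by (unfold d1, d2, d3, d4; ring).
    eapply Rle_trans. apply sum4_bound; eauto. apply Rmult_le_compat_r; auto.
  - replace (_ - _) with (- c0 * rho0 * rr k l m 1 * d1 + c0 * rho0 * rr k l m 2 * d2 + 0 * d3 + 0 * d4)
      by (unfold d1, d2, d3, d4; ring).
    eapply Rle_trans. apply sum4_bound; eauto. apply Rmult_le_compat_r; auto.
Qed.

Lemma sol_slice_inZ2 U0 c0 rho0 wf k l m f1 f2 f3 f4 df1 df2 df3 df4 t Mf :
  (forall s, is_derive f1 s (df1 s)) -> (forall s, is_derive f2 s (df2 s)) ->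
  (forall s, is_derive f3 s (df3 s)) -> (forall s, is_derive f4 s (df4 s)) ->
  (forall s, continuous df1 s) -> (forall s, continuous df2 s) ->
  (forall s, continuous df3 s) -> (forall s, continuous df4 s) ->
  (forall s, Rabs (f1 s) <= Mf /\ Rabs (f2 s) <= Mf /\ Rabs (f3 s) <= Mf /\ Rabs (f4 s) <= Mf) ->
  inZ2 c0 rho0 k l m (slice (sol U0 c0 rho0 wf k l m f1 f2 f3 f4) t).
Proof.
  intros D1 D2 D3 D4 E1 E2 E3 E4 HM.
  assert (C1 : forall lam f df, (forall s, is_derive f s (df s)) -> (forall s, continuous df s) ->
     C1fun (Phi lam wf f t)).
  { intros lam f df Hd Hc. exists (Phis lam wf df t). split.
    - intro s. apply dPhi_s; auto.
    - intro s. apply C2_sec2. apply cPhis; auto. }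
  split.
  - exists (Phi (lam1 U0 c0 k l m) wf f1 t), (Phi (lam2 U0 c0 k l m) wf f2 t),
           (Phi (lam3 U0 k) wf f3 t), (Phi (lam4 U0 k) wf f4 t).
    split; [apply (C1 _ f1 df1); auto|]. split; [apply (C1 _ f2 df2); auto|].
    split; [apply (C1 _ f3 df3); auto|]. split; [apply (C1 _ f4 df4); auto|].
    cbv zeta. repeat split; intros; reflexivity.
  - assert (HM0 : 0 <= Mf) by (destruct (HM 0) as [H _]; pose proof (Rabs_pos (f1 0)); lra).
    assert (Htd : 0 <= Rabs t * Mf) by (apply Rmult_le_pos; auto; apply Rabs_pos).
    assert (P1 : forall s, Rabs (Phi (lam1 U0 c0 k l m) wf f1 t s) <= Rabs t * Mf)
      by (intro; apply (Phi_bound _ _ _ df1); auto; intro; apply HM).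
    assert (P2 : forall s, Rabs (Phi (lam2 U0 c0 k l m) wf f2 t s) <= Rabs t * Mf)
      by (intro; apply (Phi_bound _ _ _ df2); auto; intro; apply HM).
    assert (P3 : forall s, Rabs (Phi (lam3 U0 k) wf f3 t s) <= Rabs t * Mf)
      by (intro; apply (Phi_bound _ _ _ df3); auto; intro; apply HM).
    assert (P4 : forall s, Rabs (Phi (lam4 U0 k) wf f4 t s) <= Rabs t * Mf)
      by (intro; apply (Phi_bound _ _ _ df4); auto; intro; apply HM).
    assert (Z0 : Rabs 0 <= Rabs t * Mf) by (rewrite Rabs_R0; auto).
    destruct (Cc_ge c0 rho0 k l m) as (C1' & C2' & C3' & C4').
    split; [|split; [|split]]; exists (Cc c0 rho0 k l m * (Rabs t * Mf)); intros x y z;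
      simpl; unfold M1, M2, M3, M4.
    + eapply Rle_trans. apply sum4_bound; eauto. apply Rmult_le_compat_r; auto.
    + match goal with |- Rabs (?a + ?b - ?c) <= _ => replace (a + b - c) with (a + b + (-1) * c + 0 * 0) by ring end.
      eapply Rle_trans. apply sum4_bound; eauto. apply Rmult_le_compat_r; auto.
    + match goal with |- Rabs (?a + ?b - ?c) <= _ => replace (a + b - c) with (a + b + 0 * 0 + (-1) * c) by ring end.
      eapply Rle_trans. apply sum4_bound; eauto. apply Rmult_le_compat_r; auto.
    + match goal with |- Rabs (?a + ?b) <= _ => replace (a + b) with (a + b + 0 * 0 + 0 * 0) by ring end.
      eapply Rle_trans. apply sum4_bound; eauto. apply Rmult_le_compat_r; auto.
Qed.

Lemma inZ2_ext c0 rho0 k l m (B B' : amp) :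
  (forall x y z, aF B x y z = aF B' x y z /\ aG B x y z = aG B' x y z /\
                 aH B x y z = aH B' x y z /\ aP B x y z = aP B' x y z) ->
  inZ2 c0 rho0 k l m B' -> inZ2 c0 rho0 k l m B.
Proof.
  intros He [[f1 [f2 [f3 [f4 [C1 [C2 [C3 [C4 H]]]]]]]] [[M1 B1] [[M2 B2] [[M3 B3] [M4 B4]]]]].
  cbv zeta in H. destruct H as (HF & HG & HH & HP).
  split.
  - exists f1, f2, f3, f4. split; auto. split; auto. split; auto. split; auto. cbv zeta.
    repeat split; intros x y z; destruct (He x y z) as (e1&e2&e3&e4).
    rewrite e1; apply HF. rewrite e2; apply HG. rewrite e3; apply HH. rewrite e4; apply HP.
  - split; [exists M1|split; [exists M2|split; [exists M3|exists M4]]]; intros x y z;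
      destruct (He x y z) as (e1&e2&e3&e4).
    rewrite e1; auto. rewrite e2; auto. rewrite e3; auto. rewrite e4; auto.
Qed.

Section WP.
Variables U0 c0 rho0 wf : R.
Variables k l m : nat -> R.
Hypothesis Hc : 0 < c0.
Hypothesis Hr : 0 < rho0.
Hypothesis Hk : k 1%nat * k 2%nat * k 3%nat * k 4%nat <> 0.
Hypothesis HD : DeltaZ2 c0 rho0 k l m <> 0.

Lemma Kst_ge : K1 c0 rho0 k l m <= Kst c0 rho0 k l m /\ K2 c0 rho0 k l m <= Kst c0 rho0 k l m /\
   K3 c0 rho0 k l m <= Kst c0 rho0 k l m /\ K4 c0 rho0 k l m <= Kst c0 rho0 k l m /\ 0 <= Kst c0 rho0 k l m.
Proof.
  destruct (K_nonneg c0 rho0 k l m Hc Hr HD) as (a&b&c&d). unfold Kst. repeat split; lra.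
Qed.

Lemma rep_bounded A f1 f2 f3 f4 M :
  Rep c0 rho0 k l m A f1 f2 f3 f4 ->
  (forall x y z, Rabs (aF A x y z) <= M /\ Rabs (aG A x y z) <= M /\
                Rabs (aH A x y z) <= M /\ Rabs (aP A x y z) <= M) ->
  forall s, Rabs (f1 s) <= Kst c0 rho0 k l m * M /\ Rabs (f2 s) <= Kst c0 rho0 k l m * M /\
            Rabs (f3 s) <= Kst c0 rho0 k l m * M /\ Rabs (f4 s) <= Kst c0 rho0 k l m * M.
Proof.
  intros (HF&HG&HH&HP) HM s.
  assert (M0 : 0 <= M) by (destruct (HM 0 0 0) as [H _]; pose proof (Rabs_pos (aF A 0 0 0)); lra).
  destruct (stab c0 rho0 k l m Hc Hr Hk HD A f1 f2 f3 f4 M HF HG HH HP HM s) as (a&b&c&d).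
  destruct Kst_ge as (e1&e2&e3&e4&_).
  repeat split; eapply Rle_trans; eauto; apply Rmult_le_compat_r; auto.
Qed.

Lemma sol_of_rep A t0 f1 f2 f3 f4 df1 df2 df3 df4 :
  (forall s, is_derive f1 s (df1 s)) -> (forall s, is_derive f2 s (df2 s)) ->
  (forall s, is_derive f3 s (df3 s)) -> (forall s, is_derive f4 s (df4 s)) ->
  (forall s, continuous df1 s) -> (forall s, continuous df2 s) ->
  (forall s, continuous df3 s) -> (forall s, continuous df4 s) ->
  Rep c0 rho0 k l m A f1 f2 f3 f4 ->
  IsSol U0 c0 rho0 wf A t0 (sol U0 c0 rho0 wf k l m f1 f2 f3 f4).
Proof.
  intros D1 D2 D3 D4 E1 E2 E3 E4 (HF&HG&HH&HP).
  destruct (kne k Hk) as (k1n&k2n&k3n&k4n).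
  apply (sol_IsSol U0 c0 rho0 wf k l m f1 f2 f3 f4 df1 df2 df3 df4); auto.
Qed.

Lemma WP_a t0 : forall A, inZ2 c0 rho0 k l m A ->
     exists v, IsSol U0 c0 rho0 wf A t0 v /\
       forall w, IsSol U0 c0 rho0 wf A t0 w ->
         forall t x y z, 0 <= t <= t0 ->
           vx w t x y z = vx v t x y z /\ vy w t x y z = vy v t x y z /\
           vz w t x y z = vz v t x y z /\ pp w t x y z = pp v t x y z.
Proof.
  intros A HA.
  destruct (inZ2_rep _ _ _ _ _ A HA) as [f1 [f2 [f3 [f4 [df1 [df2 [df3 [df4 (D1&D2&D3&D4&E1&E2&E3&E4&HR&_)]]]]]]]].
  exists (sol U0 c0 rho0 wf k l m f1 f2 f3 f4). split.
  - apply (sol_of_rep A t0 f1 f2 f3 f4 df1 df2 df3 df4); auto.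
  - intros w Hw t x y z Ht. apply (IsSol_unique U0 c0 rho0 wf A t0); auto.
    apply (sol_of_rep A t0 f1 f2 f3 f4 df1 df2 df3 df4); auto. lra.
Qed.


Lemma Rep_sub An A g1 g2 g3 g4 f1 f2 f3 f4 :
  Rep c0 rho0 k l m An g1 g2 g3 g4 -> Rep c0 rho0 k l m A f1 f2 f3 f4 ->
  Rep c0 rho0 k l m (amp_sub An A) (fun s => g1 s - f1 s) (fun s => g2 s - f2 s)
     (fun s => g3 s - f3 s) (fun s => g4 s - f4 s).
Proof.
  intros (a1&a2&a3&a4) (b1&b2&b3&b4).
  split; [|split; [|split]]; intros x y z; simpl.
  - rewrite a1, b1; ring.
  - rewrite a2, b2; ring.
  - rewrite a3, b3; ring.
  - rewrite a4, b4; ring.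
Qed.

Lemma slice_inZ2_of_sol A t0 w t :
  IsSol U0 c0 rho0 wf A t0 w -> inZ2 c0 rho0 k l m A -> 0 <= t <= t0 ->
  inZ2 c0 rho0 k l m (slice w t).
Proof.
  intros Hw HA Ht.
  destruct (inZ2_rep _ _ _ _ _ A HA) as [f1 [f2 [f3 [f4 [df1 [df2 [df3 [df4 (D1&D2&D3&D4&E1&E2&E3&E4&HR&[M HM])]]]]]]]].
  pose proof (sol_of_rep A t0 f1 f2 f3 f4 df1 df2 df3 df4 D1 D2 D3 D4 E1 E2 E3 E4 HR) as Hs.
  apply (inZ2_ext _ _ _ _ _ _ (slice (sol U0 c0 rho0 wf k l m f1 f2 f3 f4) t)).
  - intros x y z.
    assert (Ht' : t <= t0) by lra.
    destruct (IsSol_unique U0 c0 rho0 wf A t0 _ w Hc Hr Hs Hw t x y z Ht') as (u1&u2&u3&u4).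
    cbn [slice aF aG aH aP]. rewrite u1, u2, u3, u4. repeat split; reflexivity.
  - apply (sol_slice_inZ2 U0 c0 rho0 wf k l m f1 f2 f3 f4 df1 df2 df3 df4 t (Kst c0 rho0 k l m * M)); auto.
    apply (rep_bounded A); auto.
Qed.

Lemma WP_b t0 : forall (An : nat -> amp) (A : amp) (vn : nat -> field) (v : field),
     convZ2 c0 rho0 k l m An A ->
     (forall n, IsSol U0 c0 rho0 wf (An n) t0 (vn n)) ->
     IsSol U0 c0 rho0 wf A t0 v ->
     forall t, 0 <= t <= t0 ->
       convZ2 c0 rho0 k l m (fun n => slice (vn n) t) (slice v t).
Proof.
  intros An A vn v [HAn [HA Hconv]] Hvn Hv t Ht.
  split; [intro n; apply (slice_inZ2_of_sol (An n) t0); auto|].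
  split; [apply (slice_inZ2_of_sol A t0); auto|].
  intros eps Heps.
  destruct (inZ2_rep _ _ _ _ _ A HA) as [f1 [f2 [f3 [f4 [df1 [df2 [df3 [df4 (D1&D2&D3&D4&E1&E2&E3&E4&HR&_)]]]]]]]].
  destruct Kst_ge as (_&_&_&_&HK0).
  assert (HC0 : 0 <= Cc c0 rho0 k l m) by (pose proof (Cc_ge c0 rho0 k l m) as [H _];
     pose proof (Rabs_pos (k 1%nat)); pose proof (Rabs_pos (k 2%nat)); pose proof (Rabs_pos (l 3%nat / k 3%nat));
     pose proof (Rabs_pos (m 4%nat / k 4%nat)); lra).
  set (C := Cc c0 rho0 k l m * (Rabs t * Kst c0 rho0 k l m)).
  assert (HC : 0 <= C) by (unfold C; apply Rmult_le_pos; auto; apply Rmult_le_pos; auto; apply Rabs_pos).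
  assert (Hd : 0 < eps / (2 * (C + 1))) by (apply Rdiv_lt_0_compat; lra).
  destruct (Hconv (eps / (2 * (C + 1))) Hd) as [N HN]. exists N. intros n Hn.
  specialize (HN n Hn).
  pose proof (Z2norm_lt _ _ HN) as Hlt.
  destruct (inZ2_rep _ _ _ _ _ (An n) (HAn n)) as [g1 [g2 [g3 [g4 [dg1 [dg2 [dg3 [dg4 (G1&G2&G3&G4&F1&F2&F3&F4&HRn&_)]]]]]]]].
  set (d := eps / (2 * (C + 1))) in *.
  assert (Hb : forall s, Rabs (g1 s - f1 s) <= Kst c0 rho0 k l m * d /\ Rabs (g2 s - f2 s) <= Kst c0 rho0 k l m * d /\ Rabs (g3 s - f3 s) <= Kst c0 rho0 k l m * d /\ Rabs (g4 s - f4 s) <= Kst c0 rho0 k l m * d).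
  { apply (rep_bounded (amp_sub (An n) A) (fun s => g1 s - f1 s) (fun s => g2 s - f2 s)
      (fun s => g3 s - f3 s) (fun s => g4 s - f4 s) d).
    apply Rep_sub; auto.
    intros x y z. destruct (Hlt x y z) as (a1&a2&a3&a4). repeat split; lra. }
  pose proof (sol_of_rep (An n) t0 g1 g2 g3 g4 dg1 dg2 dg3 dg4 G1 G2 G3 G4 F1 F2 F3 F4 HRn) as Sn.
  pose proof (sol_of_rep A t0 f1 f2 f3 f4 df1 df2 df3 df4 D1 D2 D3 D4 E1 E2 E3 E4 HR) as S0.
  apply Rbar_le_lt_trans with (Finite (Cc c0 rho0 k l m * (Rabs t * (Kst c0 rho0 k l m * d)))).
  - apply Z2norm_le. intros x y z. simpl.
    destruct (IsSol_unique U0 c0 rho0 wf (An n) t0 _ (vn n) Hc Hr Sn (Hvn n) t x y z (proj2 Ht)) as (u1&u2&u3&u4).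
    destruct (IsSol_unique U0 c0 rho0 wf A t0 _ v Hc Hr S0 Hv t x y z (proj2 Ht)) as (w1&w2&w3&w4).
    rewrite u1, u2, u3, u4, w1, w2, w3, w4.
    apply (sol_diff_bound U0 c0 rho0 wf k l m g1 g2 g3 g4 dg1 dg2 dg3 dg4 f1 f2 f3 f4 df1 df2 df3 df4); auto.
  - simpl. replace (Cc c0 rho0 k l m * (Rabs t * (Kst c0 rho0 k l m * d))) with (C * d) by (unfold C; ring).
    unfold d. apply Rmult_lt_reg_r with (2 * (C + 1)). lra.
    replace (C * (eps / (2 * (C + 1))) * (2 * (C + 1))) with (C * eps) by (field; lra). nra.
Qed.

End WP.

End Mod_W.
Import Mod_W.

Module Mod_I.
Open Scope R_scope.
Open Scope R_scope.

Lemma sin2_int w t : w <> 0 ->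
  @eq R (RInt (fun u => sin (w * u) * sin (w * u)) 0 t) (t / 2 - sin (2 * w * t) / (4 * w)).
Proof.
  intro Hw.
  rewrite (RInt_FTC (fun u => u / 2 - sin (2 * w * u) / (4 * w))).
  - rewrite Rmult_0_r, sin_0. field; auto.
  - intro u. auto_derive; auto.
    replace (2 * w * u) with (2 * (w * u)) by ring. rewrite cos_2a_sin. field; auto.
  - intro u. apply cont_Rmult; apply (continuous_comp (fun u => w * u) sin);
      try apply continuous_sin; apply cont_Rmult; try apply continuous_const; apply continuous_id.
Qed.

Definition ampOf (c0 rho0 : R) (k l m : nat -> R) (f1 f2 f3 f4 : R -> R) : amp := mkAmp
  (fun x y z => k 1%nat * f1 (xi k l m 1 x y z) + k 2%nat * f2 (xi k l m 2 x y z)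
                     + l 3%nat / k 3%nat * f3 (xi k l m 3 x y z) + m 4%nat / k 4%nat * f4 (xi k l m 4 x y z))
  (fun x y z => l 1%nat * f1 (xi k l m 1 x y z) + l 2%nat * f2 (xi k l m 2 x y z) - f3 (xi k l m 3 x y z))
  (fun x y z => m 1%nat * f1 (xi k l m 1 x y z) + m 2%nat * f2 (xi k l m 2 x y z) - f4 (xi k l m 4 x y z))
  (fun x y z => - c0 * rho0 * rr k l m 1 * f1 (xi k l m 1 x y z)
                     + c0 * rho0 * rr k l m 2 * f2 (xi k l m 2 x y z)).

Lemma ampOf_bound c0 rho0 k l m f1 f2 f3 f4 Mf :
  (forall s, Rabs (f1 s) <= Mf /\ Rabs (f2 s) <= Mf /\ Rabs (f3 s) <= Mf /\ Rabs (f4 s) <= Mf) ->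
  forall x y z, let A := ampOf c0 rho0 k l m f1 f2 f3 f4 in
   Rabs (aF A x y z) <= Cc c0 rho0 k l m * Mf /\ Rabs (aG A x y z) <= Cc c0 rho0 k l m * Mf /\
   Rabs (aH A x y z) <= Cc c0 rho0 k l m * Mf /\ Rabs (aP A x y z) <= Cc c0 rho0 k l m * Mf.
Proof.
  intros HM x y z A.
  assert (HM0 : 0 <= Mf) by (destruct (HM 0) as [H _]; pose proof (Rabs_pos (f1 0)); lra).
  assert (Z0 : Rabs 0 <= Mf) by (rewrite Rabs_R0; auto).
  destruct (Cc_ge c0 rho0 k l m) as (C1' & C2' & C3' & C4').
  assert (P1 : forall s, Rabs (f1 s) <= Mf) by apply HM.
  assert (P2 : forall s, Rabs (f2 s) <= Mf) by apply HM.
  assert (P3 : forall s, Rabs (f3 s) <= Mf) by apply HM.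
  assert (P4 : forall s, Rabs (f4 s) <= Mf) by apply HM.
  unfold A, ampOf; simpl.
  split; [|split; [|split]].
  + eapply Rle_trans. apply sum4_bound; eauto. apply Rmult_le_compat_r; auto.
  + match goal with |- Rabs (?a + ?b - ?c) <= _ => replace (a + b - c) with (a + b + (-1) * c + 0 * 0) by ring end.
    eapply Rle_trans. apply sum4_bound; eauto. apply Rmult_le_compat_r; auto.
  + match goal with |- Rabs (?a + ?b - ?c) <= _ => replace (a + b - c) with (a + b + 0 * 0 + (-1) * c) by ring end.
    eapply Rle_trans. apply sum4_bound; eauto. apply Rmult_le_compat_r; auto.
  + match goal with |- Rabs (?a + ?b) <= _ => replace (a + b) with (a + b + 0 * 0 + 0 * 0) by ring end.
    eapply Rle_trans. apply sum4_bound; eauto. apply Rmult_le_compat_r; auto.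
Qed.

Lemma unstable U0 c0 rho0 wf k l m :
  0 < U0 -> 0 < c0 -> 0 < rho0 -> wf <> 0 ->
  k 1%nat * k 2%nat * k 3%nat * k 4%nat <> 0 ->
  ~ (forall eps, 0 < eps -> exists eta, 0 < eta /\
    forall A v, inZ2 c0 rho0 k l m A ->
      Rbar_lt (Z2norm A) (Finite eta) ->
      GlobalSol U0 c0 rho0 wf A v ->
      forall t, 0 <= t -> Rbar_lt (Z2norm (slice v t)) (Finite eps)).
Proof.
  intros HU Hc Hr Hw Hk H.
  destruct (H 1 Rlt_0_1) as [eta [Heta Hs]].
  destruct (kne k Hk) as (k1n&k2n&k3n&k4n).
  set (lam := lam3 U0 k).
  assert (Hlam : lam <> 0) by (unfold lam, lam3; apply Rmult_integral_contrapositive; split; lra).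
  set (a := wf / lam).
  pose proof (Cc_ge c0 rho0 k l m) as [CC _].
  assert (HC0 : 0 <= Cc c0 rho0 k l m) by (
     pose proof (Rabs_pos (k 1%nat)); pose proof (Rabs_pos (k 2%nat)); pose proof (Rabs_pos (l 3%nat / k 3%nat));
     pose proof (Rabs_pos (m 4%nat / k 4%nat)); lra).
  set (del := eta / (2 * (Cc c0 rho0 k l m + 1))).
  assert (Hdel : 0 < del) by (apply Rdiv_lt_0_compat; lra).
  set (f3 := fun s => del * sin (a * s)).
  set (df3 := fun s => del * (a * cos (a * s))).
  set (z0 := fun _ : R => 0).
  assert (D3 : forall s, is_derive f3 s (df3 s)).
  { intro s. unfold f3, df3. auto_derive; auto. ring. }
  assert (E3 : forall s, continuous df3 s).
  { intro s. unfold df3. apply cont_Rmult. apply continuous_const. apply cont_Rmult. apply continuous_const.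
    apply (continuous_comp (fun s => a * s) cos). apply cont_Rmult. apply continuous_const. apply continuous_id.
    apply continuous_cos. }
  assert (D0 : forall s, is_derive z0 s (z0 s)) by (intro; apply dR_const).
  assert (E0 : forall s, continuous z0 s) by (intro; apply continuous_const).
  assert (Bf : forall s, Rabs (z0 s) <= del /\ Rabs (z0 s) <= del /\ Rabs (f3 s) <= del /\ Rabs (z0 s) <= del).
  { intro s. unfold z0, f3. rewrite Rabs_R0. rewrite Rabs_mult, (Rabs_right del) by lra.
    pose proof (SIN_bound (a * s)). assert (Rabs (sin (a * s)) <= 1) by (apply Rabs_le; lra).
    repeat split; try lra. nra. }
  set (A := ampOf c0 rho0 k l m z0 z0 f3 z0).
  set (v := sol U0 c0 rho0 wf k l m z0 z0 f3 z0).
  assert (HR : Rep c0 rho0 k l m A z0 z0 f3 z0) by (repeat split; intros; reflexivity).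
  assert (HA : inZ2 c0 rho0 k l m A).
  { split.
    - exists z0, z0, f3, z0.
      split; [exists z0; split; auto|]. split; [exists z0; split; auto|].
      split; [exists df3; split; auto|]. split; [exists z0; split; auto|].
      cbv zeta. repeat split; intros; reflexivity.
    - pose proof (ampOf_bound c0 rho0 k l m z0 z0 f3 z0 del Bf) as Hb.
      split; [|split; [|split]]; exists (Cc c0 rho0 k l m * del); intros x y z; apply (Hb x y z). }
  assert (HAn : Rbar_lt (Z2norm A) (Finite eta)).
  { apply Rbar_le_lt_trans with (Finite (Cc c0 rho0 k l m * del)).
    - apply Z2norm_le. apply (ampOf_bound c0 rho0 k l m z0 z0 f3 z0 del Bf).
    - simpl. unfold del. apply Rmult_lt_reg_r with (2 * (Cc c0 rho0 k l m + 1)). lra.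
      replace (Cc c0 rho0 k l m * (eta / (2 * (Cc c0 rho0 k l m + 1))) * (2 * (Cc c0 rho0 k l m + 1)))
        with (Cc c0 rho0 k l m * eta) by (field; lra). nra. }
  assert (HG : GlobalSol U0 c0 rho0 wf A v).
  { intros t0 _. apply (sol_of_rep U0 c0 rho0 wf k l m Hr Hk A t0 z0 z0 f3 z0 z0 z0 df3 z0); auto. }
  set (T := 2 / del + 1 / Rabs wf + 1).
  assert (Hwa : 0 < Rabs wf) by (apply Rabs_pos_lt; auto).
  assert (HT : 0 < T).
  { unfold T. assert (0 < 2 / del) by (apply Rdiv_lt_0_compat; lra).
    assert (0 < 1 / Rabs wf) by (apply Rdiv_lt_0_compat; lra). lra. }
  pose proof (Hs A v HA HAn HG T (Rlt_le _ _ HT)) as Hlt.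
  set (x0 := lam * T / k 3%nat).
  pose proof (Z2norm_ge (slice v T) x0 0 0 (Rabs (aG (slice v T) x0 0 0))) as Hge.
  assert (Hle := Rbar_le_lt_trans _ _ _ (Hge ltac:(auto)) Hlt). simpl in Hle.
  assert (Hvy : vy v T x0 0 0 = - (del * (T / 2 - sin (2 * wf * T) / (4 * wf)))).
  { unfold v, sol, M1, M2, M3; simpl.
    assert (Z1 : forall lam' s, Phi lam' wf z0 T s = 0) by (intros; apply Phi_zero).
    rewrite !Z1.
    unfold Phi. rewrite Rmax_left by lra.
    replace (k 3%nat * x0 + l 3%nat * 0 + m 3%nat * 0) with (lam * T) by (unfold x0; field; auto).
    unfold Psi. fold lam.
    rewrite (RInt_ext _ (fun u => del * (sin (wf * u) * sin (wf * u)))).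
    2:{ intros u _. unfold f3. replace (a * (lam * T - lam * (T - u))) with (wf * u) by (unfold a; field; auto). rewrite Rmult_assoc. reflexivity. }
    rewrite RInt_Rscal.
    2:{ apply ex_RInt_cont. intro u. apply cont_Rmult; apply (continuous_comp (fun u => wf * u) sin);
      try apply continuous_sin; apply cont_Rmult; try apply continuous_const; apply continuous_id. }
    rewrite sin2_int by auto. ring. }
  change (Rabs (vy v T x0 0 0) < 1) in Hle. rewrite Hvy, Rabs_Ropp in Hle.
  assert (Hsb : Rabs (sin (2 * wf * T) / (4 * wf)) <= 1 / (4 * Rabs wf)).
  { rewrite Rabs_div by lra. rewrite Rabs_mult, (Rabs_right 4) by lra.
    pose proof (SIN_bound (2 * wf * T)). assert (Rabs (sin (2 * wf * T)) <= 1) by (apply Rabs_le; lra).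
    unfold Rdiv. apply Rmult_le_compat_r. left; apply Rinv_0_lt_compat; lra. lra. }
  assert (Hpos : 1 / del <= T / 2 - sin (2 * wf * T) / (4 * wf)).
  { pose proof (Rle_abs (sin (2 * wf * T) / (4 * wf))).
    replace (1 / (4 * Rabs wf)) with (1 / Rabs wf / 4) in Hsb by (field; lra).
    assert (0 < 1 / Rabs wf) by (apply Rdiv_lt_0_compat; lra).
    assert (T / 2 = 1 / del + 1 / Rabs wf / 2 + 1 / 2) by (unfold T; field; lra).
    lra. }
  assert (1 <= del * (T / 2 - sin (2 * wf * T) / (4 * wf))).
  { replace 1 with (del * (1 / del)) by (field; lra). apply Rmult_le_compat_l; lra. }
  rewrite Rabs_right in Hle by lra. lra.
Qed.

End Mod_I.
Import Mod_I.

Open Scope R_scope.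

Theorem proposition23 (U0 c0 rho0 wf : R) (k l m : nat -> R) :
  0 < U0 -> 0 < c0 -> 0 < rho0 -> wf <> 0 ->
  k 1%nat * k 2%nat * k 3%nat * k 4%nat <> 0 ->
  DeltaZ2 c0 rho0 k l m <> 0 ->
  (forall t0, 0 < t0 -> WellPosed U0 c0 rho0 wf k l m t0) /\
  ~ NullStable U0 c0 rho0 wf k l m.
Proof.
  intros HU Hc Hr Hw Hk HD. split.
  - intros t0 _. split.
    + apply WP_a; auto.
    + apply WP_b; auto.
  - intros [_ Hst]. apply (unstable U0 c0 rho0 wf k l m HU Hc Hr Hw Hk). exact Hst.
Qed.
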